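(* Let $\mathcal{H}$ be a separable Hilbert space with a fixed orthonormal basis $\mathcal{B}$, and let $\mathcal{S}$ be a closed subspace of $\mathcal{H}$ such that $\sup_{D\in\mathcal{D}^+}\|P_{D,\mathcal{S}}\|<\infty$. Then for every projection $Q\in\mathcal{P}(\mathcal{D})$ the pair $(Q,\mathcal{S})$ is compatible (so $P_{Q,\mathcal{S}}$ is well defined).
   Context: $\mathcal{D}$ is the algebra of bounded operators diagonal with respect to $\mathcal{B}$; $\mathcal{D}^+$ its positive invertible elements; $\mathcal{P}(\mathcal{D})$ its orthogonal projections. For positive bounded $D$ and closed $\mathcal{S}$, $(D,\mathcal{S})$ is compatible if there exists a bounded idempotent $Q'$ with range $\mathcal{S}$ and $DQ'=Q'^*D$; writing $D=\begin{pmatrix} a & b\\ b^* & c\end{pmatrix}$ with respect to $\mathcal{S}\oplus\mathcal{S}^\perp$, this holds iff $R(b)\subseteq R(a)$, and then $P_{D,\mathcal{S}}:=\begin{pmatrix} 1 & d\\ 0&0\end{pmatrix}$ with $d:\mathcal{S}^\perp\to\mathcal{S}$ the unique bounded operator with $ad=b$ and $R(d)\subseteq\overline{R(a)}$. For invertible $D$ every pair is compatible. *)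

(* Defs.v *)
From HB Require Import structures.
From mathcomp Require Import all_boot all_order all_algebra.
From mathcomp Require Import all_classical all_reals.
From mathcomp Require Import topology normedtype sequences.
From mathcomp Require Import complex.
Set Implicit Arguments. Unset Strict Implicit. Unset Printing Implicit Defensive.
Import Order.TTheory GRing.Theory Num.Theory.
Import numFieldNormedType.Exports.
Local Open Scope classical_set_scope.
Local Open Scope ring_scope.

(* Model: H = the closed subspace of l^2(N; C) of sequences supported on the
   index set I_N = {k | k < N} (N = None: all of N, i.e. infinite dimensional),
   with the fixed orthonormal basis B = (e_k)_{k in I_N} (standard basis). *)

Section Hilbert.
Variable R : realType.
Local Notation C := R[i].
Local Notation seqC := (nat -> C).

Definition sqnC (z : C) : R := complex.Re z ^+ 2 + complex.Im z ^+ 2.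

Definition in_index (N : option nat) (k : nat) : Prop :=
  if N is Some n then (k < n)%N else True.

Definition inH (N : option nat) (x : seqC) : Prop :=
  (forall k, ~ in_index N k -> x k = 0) /\
  cvgn (series (fun k => sqnC (x k))).

Definition hnorm (x : seqC) : R :=
  Num.sqrt (limn (series (fun k => sqnC (x k)))).

Definition ip (x y : seqC) : C :=
  Complex (limn (series (fun k => complex.Re (x k * conjc (y k)))))
          (limn (series (fun k => complex.Im (x k * conjc (y k))))).

Definition subs (x y : seqC) : seqC := fun k => x k - y k.
Definition zeros : seqC := fun _ => 0.

(* bounded (linear) operators on H; only their action on H matters *)
Definition bounded_op (N : option nat) (T : seqC -> seqC) : Prop :=
  (forall x, inH N x -> inH N (T x)) /\
  (forall (a : C) x y, inH N x -> inH N y ->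
      T (fun k => a * x k + y k) = (fun k => a * T x k + T y k)) /\
  (exists M : R, forall x, inH N x -> hnorm (T x) <= M * hnorm x).

Definition opnorm_le (N : option nat) (T : seqC -> seqC) (M : R) : Prop :=
  forall x, inH N x -> hnorm (T x) <= M * hnorm x.

Definition closed_subspace (N : option nat) (S : set seqC) : Prop :=
  (forall x, S x -> inH N x) /\ S zeros /\
  (forall (a : C) x y, S x -> S y -> S (fun k => a * x k + y k)) /\
  (forall (u : nat -> seqC) x, (forall n, S (u n)) -> inH N x ->
      (fun n => hnorm (subs (u n) x)) @ \oo --> (0 : R) -> S x).

Definition in_ortho (N : option nat) (S : set seqC) (y : seqC) : Prop :=
  inH N y /\ forall s, S s -> ip y s = 0.

Definition is_orth_proj (S : set seqC) (x p : seqC) : Prop :=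
  S p /\ forall s, S s -> ip (subs x p) s = 0.

Definition in_closure (A : set seqC) (z : seqC) : Prop :=
  forall e : R, 0 < e -> exists w, A w /\ hnorm (subs z w) < e.

Definition diag (d : nat -> C) (x : seqC) : seqC := fun k => d k * x k.

(* D^+ : positive invertible diagonal operators, D = diag(d) with
   c <= d_k <= M (c > 0) on the index set *)
Definition Dplus (N : option nat) (d : nat -> R) : Prop :=
  exists c M : R, 0 < c /\ forall k, in_index N k -> c <= d k <= M.

Definition diagR (d : nat -> R) : seqC -> seqC :=
  diag (fun k => Complex (d k) 0).

(* P(D) : orthogonal projections in D, i.e. diag(q) with q_k in {0,1} *)
Definition diagP (q : nat -> bool) : seqC -> seqC :=
  diag (fun k => if q k then 1 else 0).

(* (A, S) compatible: exists a bounded idempotent Q' with range S and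
   A Q' = Q'^* A  (i.e. <A Q' x, y> = <A x, Q' y> for all x, y in H) *)
Definition compatible (N : option nat) (A : seqC -> seqC) (S : set seqC) : Prop :=
  exists Q' : seqC -> seqC,
    bounded_op N Q' /\
    (forall x, inH N x -> Q' (Q' x) = Q' x) /\
    (forall z, S z <-> exists x, inH N x /\ z = Q' x) /\
    (forall x y, inH N x -> inH N y -> ip (A (Q' x)) y = ip (A x) (Q' y)).

(* P = P_{A,S}: with respect to H = S (+) S^perp, P = [[1, d], [0, 0]]
   where d : S^perp -> S satisfies a d = b (a = P_S A|_S, b = P_S A|_{S^perp})
   and R(d) is contained in the closure of R(a). *)
Definition is_PAS (N : option nat) (A : seqC -> seqC) (S : set seqC)
    (P : seqC -> seqC) : Prop :=
  bounded_op N P /\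
  (forall x, inH N x -> S (P x)) /\
  (forall s, S s -> P s = s) /\
  (forall y, in_ortho N S y -> forall s, S s -> ip (A (P y)) s = ip (A y) s) /\
  (forall y, in_ortho N S y ->
     in_closure (fun z => exists s, S s /\ is_orth_proj S (A s) z) (P y)).

End Hilbert.

(* Main.v *)
Require Import Defs.
From HB Require Import structures.
From mathcomp Require Import all_boot all_order all_algebra.
From mathcomp Require Import all_classical all_reals.
From mathcomp Require Import topology normedtype sequences.
From mathcomp Require Import complex.
Import Order.TTheory GRing.Theory Num.Theory.
Import numFieldNormedType.Exports.
Local Open Scope classical_set_scope.
Local Open Scope ring_scope.
From mathcomp Require Import ring lra.



Section L1.
Context {R : realType}.
Local Notation C := R[i].
Local Notation seqC := (nat -> C).

Definition summable (f : nat -> R) := cvgn (series f).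
Definition ssum (f : nat -> R) := limn (series f).

Lemma summableD f g : summable f -> summable g -> summable (fun k => f k + g k).
Proof. move=> hf hg; exact: (is_cvg_seriesD hf hg). Qed.

Lemma ssumD f g : summable f -> summable g -> ssum (fun k => f k + g k) = ssum f + ssum g.
Proof. move=> hf hg; exact: (lim_seriesD hf hg). Qed.

Lemma summableZ r f : summable f -> summable (fun k => r * f k).
Proof. move=> hf; exact: (@is_cvg_seriesZ R f r hf). Qed.

Lemma ssumZ r f : summable f -> ssum (fun k => r * f k) = r * ssum f.
Proof. move=> hf; exact: (@lim_seriesZ R f r hf). Qed.

Lemma summable_ext f g : summable f -> (forall k, f k = g k) -> summable g.
Proof. by move=> + e; have -> : f = g by apply/funext. Qed.

Lemma ssum_ext f g : (forall k, f k = g k) -> ssum f = ssum g.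
Proof. by move=> e; have -> : f = g by apply/funext. Qed.

Lemma summable0 : summable (fun=> 0).
Proof.
rewrite /summable; have -> : series (fun=> (0:R)) = fun=> 0.
  by apply/funext => n; rewrite /series /= big1.
exact: is_cvg_cst.
Qed.

Lemma ssum0 : ssum (fun=> 0) = 0.
Proof.
rewrite /ssum; have -> : series (fun=> (0:R)) = fun=> 0.
  by apply/funext => n; rewrite /series /= big1.
exact: lim_cst.
Qed.

Lemma summableN f : summable f -> summable (fun k => - f k).
Proof. move=> h; have := summableZ (-1) _ h. move/summable_ext; apply => k /=; by rewrite mulN1r. Qed.

Lemma ssumN f : summable f -> ssum (fun k => - f k) = - ssum f.
Proof.
move=> h; rewrite -mulN1r -ssumZ //; apply: ssum_ext => k; by rewrite mulN1r.
Qed.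

Lemma summableB f g : summable f -> summable g -> summable (fun k => f k - g k).
Proof. by move=> hf hg; apply: summableD => //; apply: summableN. Qed.

Lemma ssumB f g : summable f -> summable g -> ssum (fun k => f k - g k) = ssum f - ssum g.
Proof.
move=> hf hg; rewrite (ssumD _ _ hf (summableN _ hg)) ssumN //.
Qed.

Lemma ssum_le f g : summable f -> summable g -> (forall k, f k <= g k) -> ssum f <= ssum g.
Proof. move=> hf hg h; exact: lim_series_le. Qed.

Lemma ssum_ge0 f : summable f -> (forall k, 0 <= f k) -> 0 <= ssum f.
Proof. move=> hf h; rewrite -ssum0; exact: ssum_le summable0 hf h. Qed.

Lemma summable_le f g : (forall k, `|f k| <= g k) -> summable g -> summable f.
Proof.
move=> h hg.
have h1 : summable (fun k => f k + g k).
  apply: (@series_le_cvg R _ (fun k => 2 * g k)).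
  - move=> k; have := h k; rewrite ler_norml; lra.
  - move=> k; have := h k; have := normr_ge0 (f k); lra.
  - move=> k; have := h k; rewrite ler_norml; lra.
  - exact: summableZ.
apply: (summable_ext _ _ (summableB _ _ h1 hg)) => k /=; lra.
Qed.

Lemma series_le_ssum f n : summable f -> (forall k, 0 <= f k) -> series f n <= ssum f.
Proof.
move=> hf h; apply: nondecreasing_cvgn_le => //.
exact: nondecreasing_series.
Qed.

Lemma ssum_eq0 f : summable f -> (forall k, 0 <= f k) -> ssum f = 0 -> forall k, f k = 0.
Proof.
move=> hf h e k; apply/eqP; rewrite eq_le h andbT.
have := series_le_ssum f k.+1 hf h; rewrite e /series /= big_nat_recr //=.
have : 0 <= \sum_(0 <= i < k) f i by apply: sumr_ge0.
lra.
Qed.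

Lemma ssum_bounded f B : (forall k, 0 <= f k) -> (forall n, series f n <= B) ->
  summable f /\ ssum f <= B.
Proof.
move=> h hB.
have hs : summable f.
  apply: nondecreasing_is_cvgn; first exact: nondecreasing_series.
  by exists B => _ [n _ <-].
split => //; apply: limr_le => //; exact: nearW.
Qed.

Lemma mulcE (a b c d : R) : (Complex a b) * (Complex c d) = Complex (a*c - b*d) (a*d + b*c) :> C.
Proof. by []. Qed.
Lemma addcE (a b c d : R) : (Complex a b) + (Complex c d) = Complex (a + c) (b + d) :> C.
Proof. by []. Qed.
Lemma oppcE (a b : R) : - (Complex a b) = Complex (- a) (- b) :> C.
Proof. by []. Qed.
Lemma conjcE (a b : R) : conjc (Complex a b) = Complex a (- b) :> C.
Proof. by []. Qed.
Lemma zerocE : (0 : C) = Complex 0 0. Proof. by []. Qed.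
Lemma onecE : (1 : C) = Complex 1 0. Proof. by []. Qed.

Lemma sqge0 (p : R) : 0 <= p * p.
Proof. by rewrite -expr2 sqr_ge0. Qed.

Definition rdot (a b : C) : R := complex.Re a * complex.Re b + complex.Im a * complex.Im b.

Lemma Re_mulconj (a b : C) : complex.Re (a * conjc b) = rdot a b.
Proof. case: a => a1 a2; case: b => b1 b2; rewrite conjcE mulcE /rdot /=; ring. Qed.

Lemma Im_mulconj (a b : C) : complex.Im (a * conjc b) = rdot a ('i%C * b).
Proof. case: a => a1 a2; case: b => b1 b2; rewrite conjcE !mulcE /rdot /=; ring. Qed.

Lemma sqnC_rdot (z : C) : sqnC z = rdot z z.
Proof. by rewrite /sqnC /rdot !expr2. Qed.

Lemma rdotC a b : rdot a b = rdot b a.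
Proof. rewrite /rdot; ring. Qed.

Lemma rdotDl a b c : rdot (a + b) c = rdot a c + rdot b c.
Proof. case: a => ? ?; case: b => ? ?; case: c => ? ?; rewrite addcE /rdot /=; ring. Qed.

Lemma rdotNl a c : rdot (- a) c = - rdot a c.
Proof. case: a => ? ?; case: c => ? ?; rewrite oppcE /rdot /=; ring. Qed.

Lemma rdotMl a b c : rdot (a * b) c = complex.Re a * rdot b c - complex.Im a * rdot b ('i%C * c).
Proof. case: a => ? ?; case: b => ? ?; case: c => ? ?; rewrite !mulcE /rdot /=; ring. Qed.

Lemma rdotRl (r : R) b c : rdot (Complex r 0 * b) c = r * rdot b c.
Proof. case: b => ? ?; case: c => ? ?; rewrite !mulcE /rdot /=; ring. Qed.

Lemma rdot_ge0 a : 0 <= rdot a a.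
Proof. rewrite /rdot; nra. Qed.

Lemma rdot_ii a b : rdot ('i%C * a) ('i%C * b) = rdot a b.
Proof. case: a => ? ?; case: b => ? ?; rewrite !mulcE /rdot /=; ring. Qed.

Lemma rdot_norm a b : 2 * `|rdot a b| <= rdot a a + rdot b b.
Proof.
rewrite /rdot; move: (complex.Re a) (complex.Im a) (complex.Re b) (complex.Im b) => x y u v.
have h1 := sqge0 (x - u); have h2 := sqge0 (y - v).
have h3 := sqge0 (x + u); have h4 := sqge0 (y + v).
case: (lerP 0 (x * u + y * v)) => h.
  rewrite ger0_norm //; nra.
rewrite ltr0_norm //; nra.
Qed.

Lemma rdot_eq0 a : rdot a a = 0 -> a = 0.
Proof.
case: a => x y; rewrite /rdot /= => h.
have hx : x * x = 0 by nra.
have hy : y * y = 0 by nra.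
by move/eqP: hx; rewrite mulf_eq0 orbb => /eqP ->; move/eqP: hy; rewrite mulf_eq0 orbb => /eqP ->.
Qed.

Lemma rdot_lin_le (a : C) x y :
  rdot (a * x + y) (a * x + y) <= 2 * rdot a a * rdot x x + 2 * rdot y y.
Proof.
case: a => a1 a2; case: x => x1 x2; case: y => y1 y2; rewrite mulcE addcE /rdot /=.
have h1 := sqge0 (a1 * x1 - a2 * x2 - y1); have h2 := sqge0 (a1 * x2 + a2 * x1 - y2).
nra.
Qed.

End L1.




Section L2.
Context {R : realType}.
Local Notation C := R[i].
Local Notation seqC := (nat -> C).
Implicit Types (x y z : seqC) (w : nat -> R).

Definition wgt w := exists K : R, forall k, 0 <= w k <= K.
Definition l2 x := summable (fun k => rdot (x k) (x k)).
Definition F w x y := ssum (fun k => w k * rdot (x k) (y k)).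
Definition onew : nat -> R := fun=> 1.
Definition nn x := F onew x x.
Definition lin (a : C) x y : seqC := fun k => a * x k + y k.
Definition mulI x : seqC := fun k => 'i%C * x k.
Definition rsc (r : R) x : seqC := fun k => Complex r 0 * x k.
Definition addS x y : seqC := fun k => x k + y k.

Lemma wgt_one : wgt onew.
Proof. by exists 1 => k; rewrite /onew lexx ler01. Qed.

Lemma inH_l2 N x : inH N x -> l2 x.
Proof.
case=> _ h; rewrite /l2 /summable.
have -> : (fun k => rdot (x k) (x k)) = (fun k => sqnC (x k)).
  by apply/funext => k; rewrite sqnC_rdot.
exact: h.
Qed.

Lemma l2_inH N x : (forall k, ~ in_index N k -> x k = 0) -> l2 x -> inH N x.
Proof.
move=> hs h; by split.
Qed.

Lemma Fs w x y : wgt w -> l2 x -> l2 y -> summable (fun k => w k * rdot (x k) (y k)).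
Proof.
move=> [K hK] hx hy.
apply: (summable_le _ (fun k => K * (rdot (x k) (x k) + rdot (y k) (y k)))).
  move=> k; have [h0 h1] := andP (hK k); rewrite normrM ger0_norm //.
  have h2 := rdot_norm (x k) (y k); have h3 := normr_ge0 (rdot (x k) (y k)).
  have h4 := rdot_ge0 (x k); have h5 := rdot_ge0 (y k).
  have h6 : 0 <= K by apply: le_trans h1.
  nra.
apply: summableZ; exact: summableD.
Qed.

Lemma l2_lin a x y : l2 x -> l2 y -> l2 (lin a x y).
Proof.
move=> hx hy; apply: (summable_le _ (fun k => 2 * rdot a a * rdot (x k) (x k) + 2 * rdot (y k) (y k))).
  move=> k; rewrite ger0_norm ?rdot_ge0 //; exact: rdot_lin_le.
apply: summableD; [exact: summableZ | exact: summableZ].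
Qed.

Lemma l2_zeros : l2 (zeros R).
Proof.
apply: (summable_ext _ _ summable0) => k; rewrite /(zeros R) /rdot /=; ring.
Qed.

Lemma rdot_mul (a b : C) : rdot (a * b) (a * b) = rdot a a * rdot b b.
Proof. case: a => ? ?; case: b => ? ?; rewrite !mulcE /rdot /=; ring. Qed.

Lemma l2_mul (c : nat -> C) (K : R) x : (forall k, rdot (c k) (c k) <= K) -> l2 x ->
  l2 (fun k => c k * x k).
Proof.
move=> hc hx; apply: (summable_le _ (fun k => K * rdot (x k) (x k))).
  move=> k; rewrite ger0_norm ?rdot_ge0 // rdot_mul.
  by apply: ler_wpM2r; [exact: rdot_ge0 | exact: hc].
exact: summableZ.
Qed.

Lemma l2_mulI x : l2 x -> l2 (mulI x).
Proof.
move=> h; apply: (l2_mul (fun=> 'i%C) 1) => // k; rewrite /rdot /=; lra.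
Qed.

Lemma l2_rsc r x : l2 x -> l2 (rsc r x).
Proof.
move=> h; apply: (l2_mul (fun=> Complex r 0) (r * r)) => // k; rewrite /rdot /=; lra.
Qed.

Lemma l2_subs x y : l2 x -> l2 y -> l2 (subs x y).
Proof.
move=> hx hy; have := l2_lin (-1) y x hy hx.
have -> // : lin (-1) y x = subs x y.
by apply/funext => k; rewrite /lin /subs mulN1r addrC.
Qed.

Lemma l2_addS x y : l2 x -> l2 y -> l2 (addS x y).
Proof.
move=> hx hy; have := l2_lin 1 x y hx hy.
have -> // : lin 1 x y = addS x y.
by apply/funext => k; rewrite /lin /addS mul1r.
Qed.

Lemma ssum_lin2 (a b : R) f g : summable f -> summable g ->
  ssum (fun k => a * f k + b * g k) = a * ssum f + b * ssum g.
Proof.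
move=> hf hg; rewrite ssumD; try exact: summableZ.
by rewrite !ssumZ.
Qed.

Lemma ssum_lin3 (a b c : R) f g h : summable f -> summable g -> summable h ->
  ssum (fun k => a * f k + b * g k + c * h k) = a * ssum f + b * ssum g + c * ssum h.
Proof.
move=> hf hg hh; rewrite ssumD; last exact: summableZ.
  by rewrite ssum_lin2 // ssumZ.
by apply: summableD; exact: summableZ.
Qed.

Lemma F_sym w x y : F w x y = F w y x.
Proof. by apply: ssum_ext => k; rewrite rdotC. Qed.

Lemma F_ge0 w x : wgt w -> l2 x -> 0 <= F w x x.
Proof.
move=> hw hx; apply: ssum_ge0; first exact: Fs.
move=> k; case: hw => K hK; have [h0 _] := andP (hK k).
by apply: mulr_ge0 => //; exact: rdot_ge0.
Qed.

Lemma F_linl w a x y z : wgt w -> l2 x -> l2 y -> l2 z ->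
  F w (lin a x y) z = complex.Re a * F w x z - complex.Im a * F w x (mulI z) + F w y z.
Proof.
move=> hw hx hy hz.
have e : F w (lin a x y) z =
   ssum (fun k => complex.Re a * (w k * rdot (x k) (z k)) + (- complex.Im a) * (w k * rdot (x k) (mulI z k))
        + 1 * (w k * rdot (y k) (z k))).
  apply: ssum_ext => k; rewrite /lin rdotDl rdotMl /mulI; ring.
rewrite e ssum_lin3; first (rewrite /F; ring).
all: try exact: Fs.
apply: Fs => //; exact: l2_mulI.
Qed.

Lemma F_addl w x y z : wgt w -> l2 x -> l2 y -> l2 z ->
  F w (addS x y) z = F w x z + F w y z.
Proof.
move=> hw hx hy hz; rewrite /F -ssumD; try exact: Fs.
by apply: ssum_ext => k; rewrite /addS rdotDl mulrDr.
Qed.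

Lemma F_subl w x y z : wgt w -> l2 x -> l2 y -> l2 z ->
  F w (subs x y) z = F w x z - F w y z.
Proof.
move=> hw hx hy hz; rewrite /F -ssumB; try exact: Fs.
by apply: ssum_ext => k; rewrite /subs rdotDl rdotNl mulrDr mulrN.
Qed.

Lemma F_subr w x y z : wgt w -> l2 x -> l2 y -> l2 z ->
  F w z (subs x y) = F w z x - F w z y.
Proof.
move=> *; rewrite F_sym F_subl // (F_sym w x) (F_sym w y) //.
Qed.

Lemma F_addr w x y z : wgt w -> l2 x -> l2 y -> l2 z ->
  F w z (addS x y) = F w z x + F w z y.
Proof.
move=> *; rewrite F_sym F_addl // (F_sym w x) (F_sym w y) //.
Qed.

Lemma F_rscl w r x z : wgt w -> l2 x -> l2 z -> F w (rsc r x) z = r * F w x z.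
Proof.
move=> hw hx hz; rewrite /F -ssumZ; last exact: Fs.
by apply: ssum_ext => k; rewrite /rsc rdotRl; ring.
Qed.

Lemma F_mulI w x y : F w (mulI x) (mulI y) = F w x y.
Proof. by apply: ssum_ext => k; rewrite /mulI rdot_ii. Qed.

Lemma F_weight w1 w2 r x y : wgt w1 -> wgt w2 -> l2 x -> l2 y ->
  F (fun k => w1 k + r * w2 k) x y = F w1 x y + r * F w2 x y.
Proof.
move=> h1 h2 hx hy.
have -> : F (fun k => w1 k + r * w2 k) x y =
  ssum (fun k => 1 * (w1 k * rdot (x k) (y k)) + r * (w2 k * rdot (x k) (y k))).
  by apply: ssum_ext => k; ring.
rewrite ssum_lin2; [rewrite /F; ring | exact: Fs | exact: Fs].
Qed.

Lemma F_cross w x y (e : R) : wgt w -> l2 x -> l2 y -> 0 < e ->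
  2 * F w x y <= e * F w x x + e^-1 * F w y y.
Proof.
move=> hw hx hy he.
have -> : 2 * F w x y = ssum (fun k => 2 * (w k * rdot (x k) (y k))).
  by rewrite ssumZ //; exact: Fs.
have -> : e * F w x x + e^-1 * F w y y =
   ssum (fun k => e * (w k * rdot (x k) (x k)) + e^-1 * (w k * rdot (y k) (y k))).
  by rewrite ssum_lin2 //; exact: Fs.
apply: ssum_le.
- apply: summableZ; exact: Fs.
- apply: summableD; apply: summableZ; exact: Fs.
move=> k; case: hw => K hK; have [h0 _] := andP (hK k).
suff h : 2 * rdot (x k) (y k) <= e * rdot (x k) (x k) + e^-1 * rdot (y k) (y k).
  have := ler_wpM2l h0 h; lra.
case: (x k) => a b; case: (y k) => c d; rewrite /rdot /=.
have hei : e * e^-1 = 1 by rewrite mulfV // gt_eqF.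
have hi : 0 < e^-1 by rewrite invr_gt0.
have h1 := sqge0 (e * a - c); have h2 := sqge0 (e * b - d).
have key : e * (a * a + b * b) + e^-1 * (c * c + d * d) - 2 * (a * c + b * d) =
  e^-1 * ((e * a - c) * (e * a - c) + (e * b - d) * (e * b - d)) - (e * e^-1 - 1) * (e * (a * a + b * b) - 2 * (a * c + b * d)).
  ring.
rewrite hei subrr mul0r subr0 in key.
have := mulr_ge0 (ltW hi) (addr_ge0 h1 h2); lra.
Qed.

Lemma F_abs w x y : wgt w -> l2 x -> l2 y -> 2 * `|F w x y| <= F w x x + F w y y.
Proof.
move=> hw hx hy.
have h1 := F_cross w x y 1 hw hx hy ltr01.
have h2 : 2 * F w x (lin (-1) y (zeros R)) <= 1 * F w x x + 1^-1 * F w (lin (-1) y (zeros R)) (lin (-1) y (zeros R)).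
  apply: F_cross => //; apply: l2_lin => //; exact: l2_zeros.
have e1 : F w x (lin (-1) y (zeros R)) = - F w x y.
  by rewrite /F -ssumN; [apply: ssum_ext => k; rewrite /lin addr0 rdotC rdotMl /= rdotC; ring | exact: Fs].
have e2 : F w (lin (-1) y (zeros R)) (lin (-1) y (zeros R)) = F w y y.
  by apply: ssum_ext => k; rewrite /lin addr0 rdotMl /= rdotC rdotMl /= rdotC; ring.
rewrite e1 e2 invr1 in h2.
case: (lerP 0 (F w x y)) => h; [rewrite ger0_norm // | rewrite ltr0_norm //]; lra.
Qed.

Lemma nn_ge0 x : l2 x -> 0 <= nn x.
Proof. move=> h; exact: F_ge0 wgt_one h. Qed.

Lemma nn_eq0 x : l2 x -> nn x = 0 -> x = (zeros R).
Proof.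
move=> hx e; apply/funext => k; rewrite /(zeros R); apply: rdot_eq0.
have h := ssum_eq0 _ (Fs _ _ _ wgt_one hx hx) _ e k.
rewrite /onew mul1r in h; apply: h.
by move=> j; rewrite /onew mul1r rdot_ge0.
Qed.

Lemma F_weight_le w1 w2 x : wgt w1 -> wgt w2 -> l2 x -> (forall k, w1 k <= w2 k) ->
  F w1 x x <= F w2 x x.
Proof.
move=> h1 h2 hx h; apply: ssum_le; try exact: Fs.
move=> k; apply: ler_wpM2r => //; exact: rdot_ge0.
Qed.

Lemma hnormE x : hnorm x = Num.sqrt (nn x).
Proof.
rewrite /hnorm /nn /F /ssum; congr (Num.sqrt (limn (series _))).
by apply/funext => k; rewrite /onew mul1r sqnC_rdot.
Qed.

End L2.




Section L3.
Context {R : realType}.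
Local Notation C := R[i].
Local Notation seqC := (nat -> C).
Implicit Types (x y z : seqC) (w : nat -> R).

Lemma cvg_eps (u : nat -> R) l : u @ \oo --> l ->
  forall e, 0 < e -> exists M, forall n, (M <= n)%N -> `|l - u n| < e.
Proof.
move=> /cvgrPdist_lt h e he; have := h e he.
by case=> M _ hM; exists M => n hn; apply: hM.
Qed.

Lemma eps_cvg (u : nat -> R) l :
  (forall e, 0 < e -> exists M, forall n, (M <= n)%N -> `|l - u n| <= e) -> u @ \oo --> l.
Proof.
move=> h; apply/cvgrPdist_le => e he.
by have [M hM] := h e he; exists M => // n hn; apply: hM.
Qed.

Lemma cauchy_cvgn (u : nat -> R) :
  (forall e, 0 < e -> exists M, forall n m, (M <= n)%N -> (M <= m)%N -> `|u n - u m| < e) ->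
  cvgn u.
Proof.
move=> h; apply/cauchy_cvgP; apply: cauchy_exP => e he.
have [M hM] := h e he; exists (u M).
by exists M => // n hn; rewrite /ball /=; apply: hM.
Qed.

Lemma lim_le_eps (v : nat -> R) L e M : v @ \oo --> L -> (forall m, (M <= m)%N -> v m <= e) -> L <= e.
Proof.
move=> hv hle; rewrite leNgt; apply/negP => hL.
have hpos : 0 < L - e by rewrite subr_gt0.
have [M' hM'] := cvg_eps v L hv (L - e) hpos.
have := hM' (maxn M M') (leq_maxr _ _); have := hle (maxn M M') (leq_maxl _ _).
move: (v (maxn M M')) => t ht; rewrite ltr_norml; lra.
Qed.

Lemma cvg_series_fin (v : nat -> nat -> R) (l : nat -> R) K :
  (forall k, (fun m => v m k) @ \oo --> l k) ->
  (fun m => series (v m) K) @ \oo --> series l K.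
Proof.
move=> h; elim: K => [|K IH].
  have -> : (fun m => series (v m) 0) = fun=> 0 by apply/funext => m; rewrite /series /= big_geq.
  by rewrite /series /= big_geq //; exact: cvg_cst.
have -> : (fun m => series (v m) K.+1) = (fun m => series (v m) K + v m K).
  by apply/funext => m; rewrite seriesSr.
rewrite seriesSr; exact: cvgD.
Qed.

Lemma nnE z : nn z = ssum (fun k => rdot (z k) (z k)).
Proof. by apply: ssum_ext => k; rewrite /onew mul1r. Qed.

Lemma term_le_nn z k : l2 z -> rdot (z k) (z k) <= nn z.
Proof.
move=> hz; rewrite nnE.
apply: le_trans (series_le_ssum _ k.+1 hz (fun j => rdot_ge0 _)).
rewrite /series /= big_nat_recr //=.
have : 0 <= \sum_(0 <= i < k) rdot (z i) (z i) by apply: sumr_ge0 => i _; exact: rdot_ge0.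
lra.
Qed.

Lemma rdot_subE (p q : C) : rdot (p - q) (p - q) =
  (complex.Re p - complex.Re q) * (complex.Re p - complex.Re q) +
  (complex.Im p - complex.Im q) * (complex.Im p - complex.Im q).
Proof. case: p => ? ?; case: q => ? ?; rewrite /rdot /=; ring. Qed.

Lemma complete (u : nat -> seqC) : (forall n, l2 (u n)) ->
  (forall e, 0 < e -> exists M, forall n m, (M <= n)%N -> (M <= m)%N -> nn (subs (u n) (u m)) <= e) ->
  exists x, l2 x /\ (forall k, (forall n, u n k = 0) -> x k = 0) /\
     (forall e, 0 < e -> exists M, forall n, (M <= n)%N -> nn (subs (u n) x) <= e).
Proof.
move=> hu hc.
have comp : forall k, cvgn (fun n => complex.Re (u n k)) /\ cvgn (fun n => complex.Im (u n k)).
  move=> k; split; apply: cauchy_cvgn => e he.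
  - have hpos : 0 < e * e / 4 by rewrite divr_gt0 ?mulr_gt0.
    have [M hM] := hc (e * e / 4) hpos.
    exists M => n m hn hm; have := hM n m hn hm.
    have := term_le_nn (subs (u n) (u m)) k (l2_subs _ _ (hu n) (hu m)).
    rewrite /subs rdot_subE.
    move: (complex.Re (u n k) - complex.Re (u m k)) (complex.Im (u n k) - complex.Im (u m k)) => a b.
    have h1 := sqge0 b; have h2 := normr_ge0 a; have h3 : `|a| * `|a| = a * a by rewrite -normrM ger0_norm ?sqge0.
    nra.
  - have hpos : 0 < e * e / 4 by rewrite divr_gt0 ?mulr_gt0.
    have [M hM] := hc (e * e / 4) hpos.
    exists M => n m hn hm; have := hM n m hn hm.
    have := term_le_nn (subs (u n) (u m)) k (l2_subs _ _ (hu n) (hu m)).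
    rewrite /subs rdot_subE.
    move: (complex.Re (u n k) - complex.Re (u m k)) (complex.Im (u n k) - complex.Im (u m k)) => a b.
    have h1 := sqge0 a; have h2 := normr_ge0 b; have h3 : `|b| * `|b| = b * b by rewrite -normrM ger0_norm ?sqge0.
    nra.
pose x : seqC := fun k => Complex (limn (fun n => complex.Re (u n k))) (limn (fun n => complex.Im (u n k))).
have key : forall e, 0 < e -> exists M, forall n, (M <= n)%N ->
    summable (fun k => rdot (subs (u n) x k) (subs (u n) x k)) /\
    ssum (fun k => rdot (subs (u n) x k) (subs (u n) x k)) <= e.
  move=> e he; have [M hM] := hc e he; exists M => n hn.
  apply: ssum_bounded => [k|K]; first exact: rdot_ge0.
  pose v := fun m k => rdot (subs (u n) (u m) k) (subs (u n) (u m) k).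
  apply: (lim_le_eps (fun m => series (v m) K) _ e M).
    apply: cvg_series_fin => k; rewrite /v /subs.
    have -> : (fun m => rdot (u n k - u m k) (u n k - u m k)) =
       (fun m => (complex.Re (u n k) - complex.Re (u m k)) * (complex.Re (u n k) - complex.Re (u m k)) +
          (complex.Im (u n k) - complex.Im (u m k)) * (complex.Im (u n k) - complex.Im (u m k))).
      by apply/funext => m; rewrite rdot_subE.
    rewrite rdot_subE /x /=.
    have [c1 c2] := comp k.
    apply: cvgD; apply: cvgM; apply: cvgB; try exact: cvg_cst; by [].
  move=> m hm; apply: le_trans (hM n m hn hm); rewrite nnE.
  apply: series_le_ssum; last by move=> j; exact: rdot_ge0.
  exact: (l2_subs _ _ (hu n) (hu m)).
have [M0 hM0] := key 1 ltr01.
have hx : l2 x.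
  have [s _] := hM0 M0 (leqnn _).
  have := l2_subs _ _ (hu M0) s.
  have -> // : subs (u M0) (subs (u M0) x) = x.
  by apply/funext => k; rewrite /subs opprB addrC subrK.
exists x; split => //; split.
  move=> k h0; rewrite /x.
  have -> : (fun n => complex.Re (u n k)) = fun=> 0 by apply/funext => n; rewrite h0.
  have -> : (fun n => complex.Im (u n k)) = fun=> 0 by apply/funext => n; rewrite h0.
  by rewrite !lim_cst.
move=> e he; have [M hM] := key e he; exists M => n hn.
by rewrite nnE; case: (hM n hn).
Qed.

End L3.




Section L4.
Context {R : realType}.
Local Notation C := R[i].
Local Notation seqC := (nat -> C).
Implicit Types (x y z : seqC) (w : nat -> R).

Definition coer w := exists c : R, 0 < c /\ forall k, c <= w k.

Lemma archi_eps (e : R) : 0 < e -> exists M : nat, forall n, (M <= n)%N -> (n.+1%:R)^-1 <= e.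
Proof.
move=> he; exists (Num.bound (e^-1)) => n hn.
have hie : 0 < e^-1 by rewrite invr_gt0.
have h1 := archi_boundP (ltW hie).
have h2 : ((Num.bound e^-1)%:R : R) <= n.+1%:R by rewrite ler_nat; apply: leqW.
rewrite -[e]invrK lef_pV2 ?posrE ?ltr0n ?invr_gt0 //.
exact: ltW (lt_le_trans h1 h2).
Qed.

Lemma F_comb3 w (a b c : R) x1 y1 x2 y2 x3 y3 x4 y4 : wgt w ->
  l2 x1 -> l2 y1 -> l2 x2 -> l2 y2 -> l2 x3 -> l2 y3 ->
  (forall k, rdot (x4 k) (y4 k) = a * rdot (x1 k) (y1 k) + b * rdot (x2 k) (y2 k) + c * rdot (x3 k) (y3 k)) ->
  F w x4 y4 = a * F w x1 y1 + b * F w x2 y2 + c * F w x3 y3.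
Proof.
move=> hw h1 h2 h3 h4 h5 h6 e; rewrite /F -ssum_lin3; try exact: Fs.
by apply: ssum_ext => k; rewrite e; ring.
Qed.

Lemma F_lower w c z : (forall k, c <= w k) -> wgt w -> l2 z -> c * nn z <= F w z z.
Proof.
move=> hc hw hz; rewrite nnE -ssumZ //.
apply: ssum_le; [exact: summableZ | exact: Fs |].
move=> k; apply: ler_wpM2r => //; exact: rdot_ge0.
Qed.

Lemma F_upper w K z : (forall k, w k <= K) -> wgt w -> l2 z -> F w z z <= K * nn z.
Proof.
move=> hc hw hz; rewrite nnE -ssumZ //.
apply: ssum_le; [exact: Fs | exact: summableZ |].
move=> k; apply: ler_wpM2r => //; exact: rdot_ge0.
Qed.

Lemma F_tri w a b (eta : R) : wgt w -> l2 a -> l2 b -> 0 < eta ->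
  F w (addS a b) (addS a b) <= (1 + eta) * F w a a + (1 + eta^-1) * F w b b.
Proof.
move=> hw ha hb he.
have -> : F w (addS a b) (addS a b) = 1 * F w a a + 2 * F w a b + 1 * F w b b.
  apply: F_comb3 => // k; rewrite /addS rdotDl !(rdotC _ (a k + b k)) !rdotDl (rdotC (b k) (a k)); ring.
have := F_cross w a b eta hw ha hb he; lra.
Qed.

Lemma sqrt_cvg0 (f : nat -> R) : (forall n, 0 <= f n) ->
  (forall e, 0 < e -> exists M, forall n, (M <= n)%N -> f n <= e) ->
  (fun n => Num.sqrt (f n)) @ \oo --> 0.
Proof.
move=> h0 h; apply: eps_cvg => e he.
have he2 : 0 < e * e by rewrite mulr_gt0.
have [M hM] := h _ he2; exists M => n hn.
rewrite sub0r normrN ger0_norm ?sqrtr_ge0 //.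
have hs : Num.sqrt (f n) <= Num.sqrt (e * e) by rewrite ler_sqrt ?(ltW he2) // hM.
by apply: le_trans hs _; rewrite -expr2 sqrtr_sqr ger0_norm // ltW.
Qed.

Section Sub.
Variables (N : option nat) (S : set seqC).
Hypothesis hS : closed_subspace N S.

Lemma S_inH s : S s -> inH N s. Proof. by case: hS => h _; apply: h. Qed.
Lemma S_l2 s : S s -> l2 s. Proof. move=> h; have h1 := S_inH _ h; move: h1; exact: inH_l2. Qed.
Lemma S_zeros : S (zeros R). Proof. by case: hS => _ [h _]. Qed.
Lemma S_lin a s t : S s -> S t -> S (lin a s t).
Proof. by case: hS => _ [_ [h _]]; apply: h. Qed.
Lemma S_subs s t : S s -> S t -> S (subs s t).
Proof.
move=> hs ht; have := S_lin (-1) _ _ ht hs.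
by have -> : lin (-1) t s = subs s t by apply/funext => k; rewrite /lin /subs mulN1r addrC.
Qed.
Lemma S_mulI s : S s -> S (mulI s).
Proof.
move=> hs; have := S_lin 'i%C _ _ hs S_zeros.
by have -> : lin 'i%C s (zeros R) = mulI s by apply/funext => k; rewrite /lin /mulI /zeros addr0.
Qed.
Lemma S_rsc r s : S s -> S (rsc r s).
Proof.
move=> hs; have := S_lin (Complex r 0) _ _ hs S_zeros.
by have -> : lin (Complex r 0) s (zeros R) = rsc r s by apply/funext => k; rewrite /lin /rsc /zeros addr0.
Qed.
Lemma S_addS s t : S s -> S t -> S (addS s t).
Proof.
move=> hs ht; have := S_lin 1 _ _ hs ht.
by have -> : lin 1 s t = addS s t by apply/funext => k; rewrite /lin /addS mul1r.
Qed.

Definition orthw w x u := S u /\ forall t, S t -> F w (subs x u) t = 0.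

Lemma proj_uniq w x u1 u2 : wgt w -> coer w -> l2 x -> orthw w x u1 -> orthw w x u2 -> u1 = u2.
Proof.
move=> hw [c [hc hcw]] hx [h1 o1] [h2 o2].
have hd := S_subs _ _ h1 h2.
have l1 := S_l2 _ h1; have l2' := S_l2 _ h2; have ld := S_l2 _ hd.
have e : F w (subs u1 u2) (subs u1 u2) = 1 * F w (subs x u2) (subs u1 u2) + (-1) * F w (subs x u1) (subs u1 u2) + 0 * F w x x.
  have lx1 := l2_subs _ _ hx l1; have lx2 := l2_subs _ _ hx l2'.
  apply: (F_comb3 w 1 (-1) 0 (subs x u2) (subs u1 u2) (subs x u1) (subs u1 u2) x x) => //.
  move=> k; rewrite /subs; case: (x k) => ? ?; case: (u1 k) => ? ?; case: (u2 k) => ? ?.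
  rewrite /rdot /=; ring.
rewrite o1 // o2 // in e.
have : c * nn (subs u1 u2) <= 0.
  by apply: le_trans (F_lower _ _ _ hcw hw ld) _; rewrite e; lra.
have := nn_ge0 _ ld => n0 n1.
have hn : nn (subs u1 u2) = 0.
  apply/eqP; rewrite eq_le n0 andbT.
  by rewrite -(pmulr_rle0 _ hc).
have := nn_eq0 _ ld hn => hz; apply/funext => k.
by have := congr1 (fun f => f k) hz; rewrite /subs /zeros => /eqP; rewrite subr_eq0 => /eqP.
Qed.

Lemma proj_ex w x : wgt w -> coer w -> inH N x -> exists u, orthw w x u.
Proof.
move=> hw hcw hx.
have hx2 := inH_l2 _ _ hx.
have [c [hc hcw']] := hcw.
have [K hK] := hw.
have hKup : forall k, w k <= K by move=> k; case/andP: (hK k).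
have K0 : 0 <= K by case/andP: (hK 0%N) => h1 h2; apply: le_trans h2.
pose Phi s := F w (subs x s) (subs x s).
have Phi0 : forall s, S s -> 0 <= Phi s.
  move=> s hs; apply: F_ge0 => //; apply: l2_subs => //; exact: S_l2.
pose E := [set r | exists s, S s /\ r = Phi s].
have E0 : E (Phi (zeros R)) by exists (zeros R); split => //; exact: S_zeros.
have Elb : lbound E 0 by move=> r [s [hs ->]]; exact: Phi0.
have hE : has_inf E by split; [exists (Phi (zeros R)) | exists 0].
set d := inf E.
have dle : forall s, S s -> d <= Phi s by move=> s hs; apply: (ge_inf hE.2); exists s.
have d0 : 0 <= d by apply: lb_le_inf => //; exists (Phi (zeros R)).
have approx : forall n : nat, exists s, S s /\ Phi s < d + (n.+1%:R)^-1.
  move=> n; have hp : 0 < (n.+1%:R : R)^-1 by rewrite invr_gt0 ltr0n.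
  have [r [s [hs ->]] hr] := inf_adherent hp hE.
  by exists s.
case: (choice approx) => s hs.
have sS : forall n, S (s n) by move=> n; case: (hs n).
have sl2 : forall n, l2 (s n) by move=> n; exact: S_l2.
have sPhi : forall n, Phi (s n) < d + (n.+1%:R)^-1 by move=> n; case: (hs n).
have par : forall n m, c * nn (subs (s n) (s m)) <= 2 * (n.+1%:R)^-1 + 2 * (m.+1%:R)^-1.
  move=> n m.
  have hmid : S (lin (Complex (2^-1) 0) (s n) (lin (Complex (2^-1) 0) (s m) (zeros R))).
    by apply: S_lin => //; apply: S_lin => //; exact: S_zeros.
  have lmid := S_l2 _ hmid.
  have ln := l2_subs _ _ hx2 (sl2 n); have lm := l2_subs _ _ hx2 (sl2 m).
  have lmid' := l2_subs _ _ hx2 lmid.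
  have e : F w (subs (s n) (s m)) (subs (s n) (s m)) =
     2 * Phi (s n) + 2 * Phi (s m) + (-4) * Phi (lin (Complex (2^-1) 0) (s n) (lin (Complex (2^-1) 0) (s m) (zeros R))).
    apply: F_comb3 => // k.
    rewrite /subs /lin /zeros; case: (x k) => ? ?; case: (s n k) => ? ?; case: (s m k) => ? ?.
    rewrite /rdot /=; by field.
  have := dle _ hmid; have := sPhi n; have := sPhi m.
  have := F_lower _ _ _ hcw' hw (l2_subs _ _ (sl2 n) (sl2 m)).
  rewrite e /Phi; move: (c * nn (subs (s n) (s m))) (n.+1%:R^-1 : R) (m.+1%:R^-1 : R) => cn a b; lra.
have cauchy : forall e, 0 < e -> exists M, forall n m, (M <= n)%N -> (M <= m)%N -> nn (subs (s n) (s m)) <= e.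
  move=> e he; have he' : 0 < c * e / 4 by rewrite divr_gt0 ?mulr_gt0.
  have [M hM] := archi_eps _ he'.
  exists M => n m hn hm; have := par n m; have := hM n hn; have := hM m hm.
  move=> h1 h2 h3; rewrite -(ler_pM2l hc); move: h1 h2 h3.
  move: (c * nn (subs (s n) (s m))) (n.+1%:R^-1 : R) (m.+1%:R^-1 : R) (c * e) => cn a b ce; lra.
have [u [hu [hsupp hconv]]] := complete s sl2 cauchy.
have uinH : inH N u.
  apply: l2_inH => // k hk; apply: hsupp => n; have [hsup _] := S_inH _ (sS n); exact: hsup.
have uS : S u.
  case: hS => _ [_ [_ Scl]]; apply: (Scl s) => //.
  have -> : (fun n => hnorm (subs (s n) u)) = (fun n => Num.sqrt (nn (subs (s n) u))).
    by apply/funext => n; rewrite hnormE.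
  by apply: sqrt_cvg0 => // n; apply: nn_ge0; exact: l2_subs.
have Phiu : Phi u <= d.
  have step : forall eta, 0 < eta -> Phi u <= (1 + eta) * d.
    move=> eta heta; apply/ler_addgt0Pr => e he.
    have hie : 0 < eta^-1 by rewrite invr_gt0.
    have hA : 0 < (1 + eta^-1) * (K + 1).
      apply: mulr_gt0; last lra.
      by move: hie; move: (eta^-1) => i hi; lra.
    have he1 : 0 < e / (2 * (1 + eta)) by apply: divr_gt0 => //; apply: mulr_gt0; lra.
    have he2 : 0 < e / (2 * ((1 + eta^-1) * (K + 1))) by apply: divr_gt0 => //; apply: mulr_gt0 => //; lra.
    have [M1 hM1] := archi_eps _ he1.
    have [M2 hM2] := hconv _ he2.
    have h1 := hM1 (maxn M1 M2) (leq_maxl _ _).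
    have h2 := hM2 (maxn M1 M2) (leq_maxr _ _).
    move: h1 h2; set n := maxn M1 M2 => h1 h2.
    have dec : subs x u = addS (subs x (s n)) (subs (s n) u).
      by apply/funext => k; rewrite /subs /addS addrA subrK.
    have lb := l2_subs _ _ (sl2 n) hu.
    have t := F_tri w (subs x (s n)) (subs (s n) u) eta hw (l2_subs _ _ hx2 (sl2 n)) lb heta.
    rewrite -dec in t.
    have up := F_upper w K (subs (s n) u) hKup hw lb.
    have nb0 := nn_ge0 _ lb.
    have s1 : (1 + eta) * Phi (s n) <= (1 + eta) * d + e / 2.
      have := sPhi n => hp.
      have : (1 + eta) * Phi (s n) <= (1 + eta) * (d + (n.+1%:R)^-1).
        by apply: ler_wpM2l; [lra | exact: ltW].
      have : (1 + eta) * (n.+1%:R)^-1 <= (1 + eta) * (e / (2 * (1 + eta))) by apply: ler_wpM2l; [lra | exact: h1].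
      have -> : (1 + eta) * (e / (2 * (1 + eta))) = e / 2.
        by field; apply/eqP; lra.
      move: (n.+1%:R^-1 : R) (Phi (s n)) => a p; lra.
    have s2 : (1 + eta^-1) * F w (subs (s n) u) (subs (s n) u) <= e / 2.
      move: hA he2 h2 hie up; set A := (1 + eta^-1) * (K + 1) => hA he2 h2 hie up.
      have : (1 + eta^-1) * F w (subs (s n) u) (subs (s n) u) <= A * nn (subs (s n) u).
        rewrite /A -mulrA; apply: ler_wpM2l; first by move: hie; move: (eta^-1) => i hi; lra.
        apply: le_trans up _; apply: ler_wpM2r => //; lra.
      have : A * nn (subs (s n) u) <= A * (e / (2 * A)).
        by apply: ler_wpM2l => //; exact: ltW.
      have -> : A * (e / (2 * A)) = e / 2.
        by field; apply/eqP; lra.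
      move: ((1 + eta^-1) * F w (subs (s n) u) (subs (s n) u)) (A * nn (subs (s n) u)) => p q; lra.
    move: t s1 s2; rewrite /Phi.
    move: ((1 + eta^-1) * F w (subs (s n) u) (subs (s n) u)) ((1 + eta) * F w (subs x (s n)) (subs x (s n))) ((1 + eta) * d) => p q r; lra.
  apply/ler_addgt0Pr => e he.
  have hd1 : 0 < d + 1 by lra.
  have := step (e / (d + 1)) (divr_gt0 he hd1).
  have : e / (d + 1) * d <= e.
    rewrite mulrAC ler_pdivrMr //; nra.
  lra.
exists u; split => // t ht.
have lt := S_l2 _ ht.
have lxu := l2_subs _ _ hx2 hu.
have T0 : 0 <= F w t t by apply: F_ge0.
have var : forall lam, 0 <= (-2 * lam) * F w (subs x u) t + (lam * lam) * F w t t.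
  move=> lam; have hs' : S (lin (Complex lam 0) t u) by apply: S_lin.
  have := dle _ hs'.
  have e : Phi (lin (Complex lam 0) t u) = 1 * Phi u + (-2 * lam) * F w (subs x u) t + (lam * lam) * F w t t.
    apply: F_comb3 => // k.
    rewrite /subs /lin; case: (x k) => ? ?; case: (t k) => ? ?; case: (u k) => ? ?.
    rewrite /rdot /=; ring.
  rewrite e; lra.
move: (var (F w (subs x u) t / (F w t t + 1))) (T0).
set r := F w (subs x u) t; set T := F w t t; set lam := r / (T + 1) => h T0'.
have hT1 : 0 < T + 1 by lra.
have hr : r = lam * (T + 1) by rewrite /lam mulfVK // gt_eqF.
rewrite hr in h.
have h' : lam * lam * (T + 2) <= 0.
  have -> : lam * lam * (T + 2) = - ((-2 * lam) * (lam * (T + 1)) + lam * lam * T) by ring.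
  lra.
have hl : lam * lam = 0.
  apply/eqP; rewrite eq_le sqge0 andbT.
  have hT2 : 0 < T + 2 by lra.
  by move: h'; rewrite pmulr_lle0.
move/eqP: hl; rewrite mulf_eq0 orbb => /eqP hl0.
by rewrite hr hl0 mul0r.
Qed.

End Sub.

End L4.




Arguments S_inH {R N S} hS s.
Arguments S_l2 {R N S} hS s.
Arguments S_zeros {R N S} hS.
Arguments S_lin {R N S} hS a s t.
Arguments S_subs {R N S} hS s t.
Arguments S_mulI {R N S} hS s.
Arguments S_rsc {R N S} hS r s.
Arguments S_addS {R N S} hS s t.
Arguments proj_uniq {R N S} hS w x u1 u2.
Arguments proj_ex {R N S} hS w x.

Section L5.
Context {R : realType}.
Local Notation C := R[i].
Local Notation seqC := (nat -> C).
Implicit Types (x y z : seqC) (w : nat -> R).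

Lemma F_zerol w t : F w (zeros R) t = 0.
Proof.
rewrite /F -(@ssum0 R); apply: ssum_ext => k.
by rewrite /zeros /rdot /= !mul0r add0r mulr0.
Qed.

Lemma subss x : subs x x = zeros R.
Proof. by apply/funext => k; rewrite /subs /zeros subrr. Qed.

Section P.
Variables (N : option nat) (S : set seqC).
Hypothesis hS : closed_subspace N S.

Definition projw w x : seqC :=
  match pselect (exists u, orthw S w x u) with
  | left h => proj1_sig (cid h)
  | right _ => zeros R
  end.

Variable w : nat -> R.
Hypothesis hw : wgt w.
Hypothesis hc : coer w.

Lemma projw_eq x u : l2 x -> orthw S w x u -> projw w x = u.
Proof.
move=> hx hu; rewrite /projw; case: pselect => [h|h]; last by exfalso; apply: h; exists u.
case: (cid h) => u' hu' /=; exact: (proj_uniq hS w x u' u hw hc hx hu' hu).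
Qed.

Lemma projw_spec x : inH N x -> orthw S w x (projw w x).
Proof.
move=> hx; have [u hu] := proj_ex hS w x hw hc hx.
by rewrite (projw_eq x u (inH_l2 _ _ hx) hu).
Qed.

Lemma projw_S x : inH N x -> S (projw w x).
Proof. by move=> hx; case: (projw_spec x hx). Qed.

Lemma projw_orth x t : inH N x -> S t -> F w (subs x (projw w x)) t = 0.
Proof. by move=> hx ht; case: (projw_spec x hx) => _; apply. Qed.

Lemma projw_inH x : inH N x -> inH N (projw w x).
Proof. by move=> hx; apply: (S_inH hS); exact: projw_S. Qed.

Lemma projw_l2 x : inH N x -> l2 (projw w x).
Proof. by move=> hx; apply: (inH_l2 N); exact: projw_inH. Qed.

Lemma projw_fix s : S s -> projw w s = s.
Proof.
move=> hs; apply: projw_eq; first exact: (S_l2 hS _ hs).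
by split => // t ht; rewrite subss F_zerol.
Qed.

Lemma inH_lin a x y : inH N x -> inH N y -> inH N (lin a x y).
Proof.
move=> hx hy; apply: l2_inH; last by apply: l2_lin; apply: inH_l2; eassumption.
move=> k hk; rewrite /lin; case: hx => hx _; case: hy => hy _.
by rewrite hx // hy // mulr0 addr0.
Qed.

Lemma projw_lin a x y : inH N x -> inH N y ->
  projw w (lin a x y) = lin a (projw w x) (projw w y).
Proof.
move=> hx hy; apply: projw_eq; first by apply: inH_l2; exact: inH_lin.
split; first by apply: (S_lin hS); apply: projw_S.
move=> t ht.
have e : subs (lin a x y) (lin a (projw w x) (projw w y)) =
   lin a (subs x (projw w x)) (subs y (projw w y)).
  by apply/funext => k; rewrite /subs /lin opprD addrACA -mulrBr.
have lt := S_l2 hS _ ht.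
rewrite e F_linl //; try (apply: l2_subs => //; [apply: inH_l2; eassumption | exact: projw_l2]).
rewrite !projw_orth //; last exact: (S_mulI hS _ ht).
by rewrite !mulr0 subrr add0r.
Qed.

Lemma projw_sym x y : inH N x -> inH N y -> F w (projw w x) y = F w x (projw w y).
Proof.
move=> hx hy.
have lx := inH_l2 _ _ hx; have ly := inH_l2 _ _ hy.
have lpx := projw_l2 x hx; have lpy := projw_l2 y hy.
have e1 : F w (projw w x) y = F w (projw w x) (projw w y) + F w (subs y (projw w y)) (projw w x).
  rewrite F_subl // (F_sym w y) (F_sym w (projw w y)); lra.
have e2 : F w x (projw w y) = F w (projw w x) (projw w y) + F w (subs x (projw w x)) (projw w y).
  rewrite F_subl //; lra.
by rewrite e1 e2 !projw_orth //; apply: projw_S.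
Qed.

Lemma projw_contr x : inH N x -> F w (projw w x) (projw w x) <= F w x x.
Proof.
move=> hx.
have lx := inH_l2 _ _ hx; have lpx := projw_l2 x hx.
have ld := l2_subs _ _ lx lpx.
have e : F w x x = 1 * F w (projw w x) (projw w x) + 2 * F w (subs x (projw w x)) (projw w x)
           + 1 * F w (subs x (projw w x)) (subs x (projw w x)).
  apply: F_comb3 => // k; rewrite /subs; case: (x k) => ? ?; case: (projw w x k) => ? ?.
  rewrite /rdot /=; ring.
rewrite e projw_orth //; last exact: projw_S.
have := F_ge0 w _ hw ld; lra.
Qed.

End P.

End L5.




Arguments S_inH {R N S} hS s.
Arguments S_l2 {R N S} hS s.
Arguments S_zeros {R N S} hS.
Arguments S_lin {R N S} hS a s t.
Arguments S_subs {R N S} hS s t.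
Arguments S_mulI {R N S} hS s.
Arguments S_rsc {R N S} hS r s.
Arguments S_addS {R N S} hS s t.
Arguments projw_eq {R N S} hS w hw hc x u.
Arguments projw_spec {R N S} hS w hw hc x.
Arguments projw_S {R N S} hS w hw hc x.
Arguments projw_orth {R N S} hS w hw hc x t.
Arguments projw_inH {R N S} hS w hw hc x.
Arguments projw_l2 {R N S} hS w hw hc x.
Arguments projw_fix {R N S} hS w hw hc s.
Arguments projw_lin {R N S} hS w hw hc a x y.
Arguments projw_sym {R N S} hS w hw hc x y.
Arguments projw_contr {R N S} hS w hw hc x.

Section L6.
Context {R : realType}.
Local Notation C := R[i].
Local Notation seqC := (nat -> C).
Implicit Types (x y z : seqC) (w : nat -> R).

Lemma ipE x y : ip x y = Complex (F onew x y) (F onew x (mulI y)).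
Proof.
rewrite /ip /F /ssum; congr Complex; congr (limn (series _)); apply/funext => k.
  by rewrite Re_mulconj /onew mul1r.
by rewrite Im_mulconj /onew mul1r.
Qed.

Lemma F_diagR d x y : F onew (diagR d x) y = F d x y.
Proof. by apply: ssum_ext => k; rewrite /diagR /diag /onew mul1r rdotRl. Qed.

Definition wq (q : nat -> bool) : nat -> R := fun k => if q k then 1 else 0.

Lemma F_diagP q x y : F onew (diagP q x) y = F (wq q) x y.
Proof.
apply: ssum_ext => k; rewrite /diagP /diag /onew /wq mul1r.
destruct (q k); first by rewrite !mul1r.
by rewrite !mul0r /rdot /= !mul0r add0r.
Qed.

Lemma hnorm_le_nn (P : seqC -> seqC) x (M : R) : 0 <= M -> l2 (P x) -> l2 x ->
  nn (P x) <= M ^+ 2 * nn x -> hnorm (P x) <= M * hnorm x.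
Proof.
move=> hM lp lx h; rewrite !hnormE.
have := nn_ge0 _ lx => n0.
rewrite -(ger0_norm hM) -sqrtr_sqr -sqrtrM ?sqr_ge0 //.
by rewrite ler_sqrt // mulr_ge0 // sqr_ge0.
Qed.

Lemma nn_le_hnorm (P : seqC -> seqC) x (M : R) : l2 (P x) -> l2 x ->
  hnorm (P x) <= M * hnorm x -> nn (P x) <= M ^+ 2 * nn x.
Proof.
move=> lp lx h.
have n0 := nn_ge0 _ lx; have n1 := nn_ge0 _ lp.
rewrite !hnormE in h.
have h0 : 0 <= Num.sqrt (nn (P x)) by apply: sqrtr_ge0.
have hp := ler_pM h0 h0 h h.
have -> : nn (P x) = Num.sqrt (nn (P x)) * Num.sqrt (nn (P x)) by rewrite -expr2 sqr_sqrtr.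
apply: le_trans hp _.
have -> : M * Num.sqrt (nn x) * (M * Num.sqrt (nn x)) = M ^+ 2 * (Num.sqrt (nn x) ^+ 2) by rewrite !expr2; ring.
by rewrite sqr_sqrtr.
Qed.

Lemma l2_diagR d (K : R) x : (forall k, 0 <= d k <= K) -> l2 x -> l2 (diagR d x).
Proof.
move=> hd hx; apply: (l2_mul (fun k => Complex (d k) 0) (K * K)) => // k.
rewrite /rdot /=; case/andP: (hd k) => h0 h1; nra.
Qed.

Lemma PAS_projw N (S : set seqC) (d : nat -> R) : closed_subspace N S -> wgt d -> coer d ->
  is_PAS N (diagR d) S (projw S d).
Proof.
move=> hS hw hc.
have [K hK] := hw; have [c [c0 hcK]] := hc.
split.
  split; first by move=> x hx; apply: (projw_inH hS).
  split; first by move=> a x y hx hy; exact: (projw_lin hS d hw hc a x y hx hy).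
  have K0 : 0 <= K by case/andP: (hK 0%N) => h1 h2; apply: le_trans h2.
  exists (Num.sqrt (K / c)) => x hx.
  have lx := inH_l2 _ _ hx; have lp := projw_l2 hS d hw hc x hx.
  apply: hnorm_le_nn => //; first exact: sqrtr_ge0.
  rewrite sqr_sqrtr ?divr_ge0 ?(ltW c0) //.
  have h1 := F_lower d c _ hcK hw lp.
  have h2 := F_upper d K x (fun k => proj2 (andP (hK k))) hw lx.
  have h3 := projw_contr hS d hw hc x hx.
  have : c * nn (projw S d x) <= K * nn x by lra.
  by rewrite mulrAC ler_pdivlMr // mulrC.
split; first by move=> x hx; apply: (projw_S hS).
split; first by move=> s hs; apply: (projw_fix hS).
split.
  move=> y [hy _] s hs; rewrite !ipE !F_diagR.
  have ly := inH_l2 _ _ hy; have lp := projw_l2 hS d hw hc y hy.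
  have ls := S_l2 hS s hs; have lis := l2_mulI _ ls.
  have e1 := projw_orth hS d hw hc y s hy hs.
  have e2 := projw_orth hS d hw hc y (mulI s) hy (S_mulI hS s hs).
  rewrite F_subl // in e1; rewrite F_subl // in e2.
  congr Complex; lra.
move=> y [hy _] e he.
set z := projw S d y.
have hz : S z by apply: (projw_S hS).
exists z; split; last by rewrite subss hnormE /nn F_zerol sqrtr0.
pose dinv := fun k => (d k)^-1.
have hdinv : forall k, 0 <= dinv k <= c^-1.
  move=> k; have := hcK k => hk; have dk : 0 < d k by apply: lt_le_trans hk.
  rewrite /dinv invr_ge0 (ltW dk) /= lef_pV2 ?posrE //.
have hwi : inH N (diagR dinv z).
  apply: l2_inH.
    move=> k hk; rewrite /diagR /diag; have [hs _] := S_inH hS z hz.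
    by rewrite hs // mulr0.
  apply: (l2_diagR dinv (c^-1)) => //; exact: S_l2 hS z hz.
exists (projw S d (diagR dinv z)); split; first exact: (projw_S hS).
split => // t ht; rewrite ipE.
have lz := S_l2 hS z hz; have lt := S_l2 hS t ht; have lit := l2_mulI _ lt.
have ls := projw_l2 hS d hw hc _ hwi.
have lds : l2 (diagR d (projw S d (diagR dinv z))).
  by apply: (l2_diagR d K) => //.
have key : forall t', S t' -> l2 t' -> F onew (subs (diagR d (projw S d (diagR dinv z))) z) t' = 0.
  move=> t' ht' lt'.
  have o := projw_orth hS d hw hc _ t' hwi ht'.
  rewrite (F_subl onew _ _ _ wgt_one lds lz lt') F_diagR.
  rewrite (F_subl d _ _ _ hw (inH_l2 _ _ hwi) ls lt') in o.
  have e' : F d (diagR dinv z) t' = F onew z t'.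
    apply: ssum_ext => k; rewrite /diagR /diag rdotRl /onew /dinv mulrA mulfV ?mul1r //.
    have := hcK k => hk; rewrite gt_eqF //; exact: lt_le_trans hk.
  rewrite e' in o; lra.
rewrite key // key //; exact: S_mulI hS t ht.
Qed.

End L6.




Section L7a.
Context {R : realType}.

Lemma key_ineq (e e' A B c al be : R) : 0 < e -> e < e' -> 0 <= A -> 0 <= B -> 0 <= al -> 0 <= be ->
  al = (e' + e) * c - e' * B - e * A -> be = B + A - 2 * c ->
  B <= A /\ al + be <= (A - B) + e' * A.
Proof.
move=> he hee hA hB hal hbe eal ebe.
have hc : 2 * c <= A + B by lra.
have h1 : e' * B + e * A <= (e' + e) * c by lra.
have h2 : (e' + e) * (2 * c) <= (e' + e) * (A + B) by apply: ler_wpM2l => //; lra.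
have hBA : B <= A.
  rewrite leNgt; apply/negP => hlt.
  have : 0 < (e' - e) * (B - A) by apply: mulr_gt0; lra.
  nra.
split => //.
have h3 : (e' + e) * be <= (e' + e) * (A - B).
  have : 0 <= e * (A - B) by apply: mulr_ge0; lra.
  nra.
have h4 : be <= A - B.
  by move: h3; rewrite ler_pM2l //; lra.
have h5 : al <= e' * A.
  have : 0 <= e * (A - B) by apply: mulr_ge0; lra.
  have : 0 <= e' * B by apply: mulr_ge0; lra.
  nra.
lra.
Qed.

End L7a.

Section L7.
Context {R : realType}.
Local Notation C := R[i].
Local Notation seqC := (nat -> C).
Implicit Types (x y z : seqC) (w : nat -> R).

Definition epsn (n : nat) : R := (n.+1%:R)^-1.

Lemma epsn_gt0 n : 0 < epsn n.
Proof. by rewrite /epsn invr_gt0 ltr0n. Qed.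

Lemma epsn_le1 n : epsn n <= 1.
Proof. by rewrite /epsn invf_le1 ?ltr0n // ler1n. Qed.

Lemma epsn_lt n m : (n < m)%N -> epsn m < epsn n.
Proof.
move=> h; rewrite /epsn ltf_pV2; first by rewrite ltr_nat ltnS.
  by rewrite posrE ltr0n.
by rewrite posrE ltr0n.
Qed.

Variable q : nat -> bool.
Local Notation wa := (@wq R q).
Definition wn (n : nat) : nat -> R := fun k => if q k then 1 else epsn n.
Definition wbd : nat -> R := fun k => if q k then 0 else 1.

Lemma wgt_wn n : wgt (wn n).
Proof.
exists 1 => k; rewrite /wn; case: (q k); first by rewrite ler01 lexx.
by rewrite (ltW (epsn_gt0 n)) epsn_le1.
Qed.

Lemma coer_wn n : coer (wn n).
Proof.
exists (epsn n); split; first exact: epsn_gt0.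
by move=> k; rewrite /wn; case: (q k); [exact: epsn_le1 | exact: lexx].
Qed.

Lemma Dplus_wn N n : Dplus N (wn n).
Proof.
exists (epsn n), 1; split; first exact: epsn_gt0.
move=> k _; rewrite /wn; case: (q k).
  by rewrite epsn_le1 lexx.
by rewrite lexx epsn_le1.
Qed.

Lemma wgt_wq : wgt wa.
Proof. by exists 1 => k; rewrite /wq; case: (q k); rewrite ?lexx ?ler01. Qed.

Lemma wgt_wb : wgt wbd.
Proof. by exists 1 => k; rewrite /wbd; case: (q k); rewrite ?lexx ?ler01. Qed.

Lemma F_split n x y : l2 x -> l2 y -> F (wn n) x y = F wa x y + epsn n * F wbd x y.
Proof.
move=> hx hy; rewrite -F_weight //; [|exact: wgt_wq|exact: wgt_wb].
congr F; apply/funext => k; rewrite /wn /wq /wbd; case: (q k); ring.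
Qed.

Lemma nn_split x : l2 x -> nn x = F wa x x + 1 * F wbd x x.
Proof.
move=> hx; rewrite /nn -F_weight //; [|exact: wgt_wq|exact: wgt_wb].
congr F; apply/funext => k; rewrite /onew /wq /wbd; case: (q k); ring.
Qed.

Lemma Fwb_le x : l2 x -> F wbd x x <= nn x.
Proof.
move=> hx; have := F_upper wbd 1 x _ wgt_wb hx; rewrite mul1r; apply.
by move=> k; rewrite /wbd; case: (q k); rewrite ?ler01 ?lexx.
Qed.

Lemma Fwq_le x : l2 x -> F wa x x <= nn x.
Proof.
move=> hx; have := F_upper wa 1 x _ wgt_wq hx; rewrite mul1r; apply.
by move=> k; rewrite /wq; case: (q k); rewrite ?ler01 ?lexx.
Qed.

Lemma nn_sub_le (a b : seqC) : l2 a -> l2 b -> nn (subs a b) <= 2 * nn a + 2 * nn b.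
Proof.
move=> ha hb; rewrite !nnE -!ssumZ //.
rewrite -ssumD; try exact: summableZ.
apply: ssum_le; [exact: l2_subs | apply: summableD; exact: summableZ |].
move=> k; rewrite /subs; case: (a k) => a1 a2; case: (b k) => b1 b2; rewrite /rdot /=.
have h1 := sqge0 (a1 + b1); have h2 := sqge0 (a2 + b2); nra.
Qed.

Lemma nn_subC (a b : seqC) : nn (subs a b) = nn (subs b a).
Proof.
apply: ssum_ext => k; rewrite /subs; case: (a k) => ? ?; case: (b k) => ? ?; rewrite /rdot /=; ring.
Qed.

End L7.




Arguments S_inH {R N S} hS s.
Arguments S_l2 {R N S} hS s.
Arguments S_zeros {R N S} hS.
Arguments S_lin {R N S} hS a s t.
Arguments S_subs {R N S} hS s t.
Arguments S_mulI {R N S} hS s.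
Arguments S_rsc {R N S} hS r s.
Arguments S_addS {R N S} hS s t.
Arguments projw_eq {R N S} hS w hw hc x u.
Arguments projw_spec {R N S} hS w hw hc x.
Arguments projw_S {R N S} hS w hw hc x.
Arguments projw_orth {R N S} hS w hw hc x t.
Arguments projw_inH {R N S} hS w hw hc x.
Arguments projw_l2 {R N S} hS w hw hc x.
Arguments projw_fix {R N S} hS w hw hc s.
Arguments projw_lin {R N S} hS w hw hc a x y.
Arguments projw_sym {R N S} hS w hw hc x y.
Arguments projw_contr {R N S} hS w hw hc x.

Section L8.
Context {R : realType}.
Local Notation C := R[i].
Local Notation seqC := (nat -> C).
Implicit Types (x y z : seqC) (w : nat -> R).

Variables (N : option nat) (S : set seqC) (q : nat -> bool) (M0 : R).
Hypothesis hS : closed_subspace N S.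
Hypothesis hM : forall d : nat -> R, Dplus N d ->
     forall P, is_PAS N (diagR d) S P -> opnorm_le N P M0.
Local Notation wa := (@wq R q).
Local Notation wn := (@wn R q).
Local Notation wb := (@wbd R q).

Definition Pnd (n : nat) (x : seqC) : seqC := projw S (wn n) x.
Local Notation Pn := Pnd.

Lemma Pn_bound n x : inH N x -> nn (Pn n x) <= M0 ^+ 2 * nn x.
Proof.
move=> hx; apply: nn_le_hnorm.
- exact: (projw_l2 hS _ (wgt_wn q n) (coer_wn q n)).
- exact: inH_l2 _ _ hx.
- exact: (hM (wn n) (Dplus_wn q N n) _ (PAS_projw N S (wn n) hS (wgt_wn q n) (coer_wn q n))).
Qed.

Lemma Pn_l2 n x : inH N x -> l2 (Pn n x).
Proof. exact: (projw_l2 hS _ (wgt_wn q n) (coer_wn q n)). Qed.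

Lemma Pn_S n x : inH N x -> S (Pn n x).
Proof. exact: (projw_S hS _ (wgt_wn q n) (coer_wn q n)). Qed.

Lemma Pn_orth n x t : inH N x -> S t ->
  F wa (subs x (Pn n x)) t + epsn n * F wb (subs x (Pn n x)) t = 0.
Proof.
move=> hx ht; rewrite -F_split.
- exact: (projw_orth hS _ (wgt_wn q n) (coer_wn q n)).
- apply: l2_subs; [exact: inH_l2 _ _ hx | exact: Pn_l2].
- exact: S_l2 hS _ ht.
Qed.

Definition conv (u : nat -> seqC) (v : seqC) :=
  forall e, 0 < e -> exists M, forall n, (M <= n)%N -> nn (subs (u n) v) <= e.

Lemma lim_exists x : inH N x -> exists v, l2 v /\ conv (fun n => Pn n x) v.
Proof.
move=> hx.
have lx := inH_l2 _ _ hx.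
pose u := fun n => Pn n x.
have lu : forall n, l2 (u n) by move=> n; exact: Pn_l2.
pose r := fun n => subs x (u n).
have lr : forall n, l2 (r n) by move=> n; exact: l2_subs.
pose A := fun n => F wb (r n) (r n).
have A0 : forall n, 0 <= A n by move=> n; apply: F_ge0 => //; exact: wgt_wb.
pose B0 := 2 * nn x + 2 * (M0 ^+ 2 * nn x).
have AB : forall n, A n <= B0.
  move=> n; apply: le_trans (Fwb_le q _ (lr n)) _.
  apply: le_trans (nn_sub_le _ _ lx (lu n)) _.
  have := Pn_bound n x hx; rewrite /u /B0; move: (M0 ^+ 2 * nn x) => p; lra.
have step : forall n m, (n < m)%N ->
    A n <= A m /\ nn (subs (u m) (u n)) <= (A m - A n) + epsn n * A m.
  move=> n m hnm.
  have hd : subs (u m) (u n) = subs (r n) (r m).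
    have gen : forall a b c : C, a - b = (c - b) - (c - a).
      by move=> a b c; apply/esym; rewrite opprB addrC addrA subrK.
    by apply/funext => k; rewrite /r /subs; apply: gen.
  have hdS : S (subs (r n) (r m)) by rewrite -hd; apply: (S_subs hS); exact: Pn_S.
  have ld := S_l2 hS _ hdS.
  have on := Pn_orth n x _ hx hdS.
  have om := Pn_orth m x _ hx hdS.
  have ea : F wa (subs (r n) (r m)) (subs (r n) (r m)) =
      F wa (r n) (subs (r n) (r m)) - F wa (r m) (subs (r n) (r m)).
    by rewrite F_subl //; exact: wgt_wq.
  have eb1 : F wb (r n) (subs (r n) (r m)) = A n - F wb (r n) (r m).
    by rewrite F_subr //; exact: wgt_wb.
  have eb2 : F wb (r m) (subs (r n) (r m)) = F wb (r n) (r m) - A m.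
    by rewrite F_subr // ?(F_sym wb (r m) (r n)) //; exact: wgt_wb.
  have eb : F wb (subs (r n) (r m)) (subs (r n) (r m)) = A n + A m - 2 * F wb (r n) (r m).
    rewrite F_subl //; last exact: wgt_wb.
    rewrite eb1 eb2; ring.
  rewrite /r in on om ea eb1 eb2.
  have eqa : F wa (subs (r n) (r m)) (subs (r n) (r m)) =
      (epsn n + epsn m) * F wb (r n) (r m) - epsn n * A n - epsn m * A m.
    move: on om ea eb1 eb2; rewrite /r /A.
    move: (F wa (subs x (u n)) (subs (subs x (u n)) (subs x (u m)))) => p1.
    move: (F wa (subs x (u m)) (subs (subs x (u n)) (subs x (u m)))) => p2.
    move: (F wb (subs x (u n)) (subs (subs x (u n)) (subs x (u m)))) => p3.
    move: (F wb (subs x (u m)) (subs (subs x (u n)) (subs x (u m)))) => p4.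
    move=> on om -> e1 e2.
    have e3 : p1 = - (epsn n * p3) by lra.
    have e4 : p2 = - (epsn m * p4) by lra.
    rewrite e3 e4 e1 e2; ring.
  have eqb : F wb (subs (r n) (r m)) (subs (r n) (r m)) = A n + A m - 2 * F wb (r n) (r m).
    by rewrite eb.
  have [k1 k2] := key_ineq (epsn m) (epsn n) (A m) (A n) (F wb (r n) (r m))
     (F wa (subs (r n) (r m)) (subs (r n) (r m))) (F wb (subs (r n) (r m)) (subs (r n) (r m)))
     (epsn_gt0 m) (epsn_lt n m hnm) (A0 m) (A0 n)
     (F_ge0 _ _ (wgt_wq q) ld) (F_ge0 _ _ (wgt_wb q) ld) eqa eqb.
  split => //; rewrite hd (nn_split q) // mul1r; lra.
have Ainc : forall n m, (n <= m)%N -> A n <= A m.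
  move=> n m; rewrite leq_eqVlt => /orP [/eqP -> //|h].
  by case: (step n m h).
have cA : cvgn A.
  apply: nondecreasing_is_cvgn; first by move=> n m h; exact: Ainc.
  by exists B0 => _ [n _ <-].
have AL : forall n, A n <= limn A.
  by move=> n; apply: nondecreasing_cvgn_le => // i j h; exact: Ainc.
have B00 : 0 <= B0 by apply: le_trans (AB 0%N); exact: A0.
have cauchy : forall e, 0 < e -> exists M, forall n m, (M <= n)%N -> (M <= m)%N ->
    nn (subs (u n) (u m)) <= e.
  move=> e he.
  have he2 : 0 < e / 2 by apply: divr_gt0.
  have [M1 hM1] := cvg_eps A (limn A) cA (e / 2) he2.
  have he3 : 0 < e / (2 * (B0 + 1)) by apply: divr_gt0 => //; apply: mulr_gt0; lra.
  have [M2 hM2] := archi_eps _ he3.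
  have small : forall t, 0 <= t -> t <= e / (2 * (B0 + 1)) -> forall a, 0 <= a -> a <= B0 -> t * a <= e / 2.
    move=> t t0 te a a0 aB.
    have : t * a <= t * (B0 + 1) by apply: ler_wpM2l => //; lra.
    have : t * (B0 + 1) <= e / (2 * (B0 + 1)) * (B0 + 1) by apply: ler_wpM2r => //; lra.
    have -> : e / (2 * (B0 + 1)) * (B0 + 1) = e / 2 by field; apply/eqP; lra.
    move: (t * a) (t * (B0 + 1)) => p1 p2; lra.
  exists (maxn M1 M2) => n m hn hm.
  have hn1 : (M1 <= n)%N by apply: leq_trans hn; exact: leq_maxl.
  have hn2 : (M2 <= n)%N by apply: leq_trans hn; exact: leq_maxr.
  have hm1 : (M1 <= m)%N by apply: leq_trans hm; exact: leq_maxl.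
  have hm2 : (M2 <= m)%N by apply: leq_trans hm; exact: leq_maxr.
  case: (ltngtP n m) => hnm.
  - have [_ h] := step n m hnm; rewrite nn_subC.
    have := small (epsn n) (ltW (epsn_gt0 n)) (hM2 n hn2) (A m) (A0 m) (AB m).
    have := hM1 n hn1; have := AL m.
    move: h; move: (epsn n * A m) => p; rewrite ltr_norml; lra.
  - have [_ h] := step m n hnm.
    have := small (epsn m) (ltW (epsn_gt0 m)) (hM2 m hm2) (A n) (A0 n) (AB n).
    have := hM1 m hm1; have := AL n.
    move: h; move: (epsn m * A n) => p; rewrite ltr_norml; lra.
  - by rewrite hnm subss /nn F_zerol; lra.
have [v [lv [_ hv]]] := complete u lu cauchy.
by exists v.
Qed.

End L8.



Arguments S_inH {R N S} hS s.
Arguments S_l2 {R N S} hS s.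
Arguments S_zeros {R N S} hS.
Arguments S_lin {R N S} hS a s t.
Arguments S_subs {R N S} hS s t.
Arguments S_mulI {R N S} hS s.
Arguments S_rsc {R N S} hS r s.
Arguments S_addS {R N S} hS s t.
Arguments projw_eq {R N S} hS w hw hc x u.
Arguments projw_spec {R N S} hS w hw hc x.
Arguments projw_S {R N S} hS w hw hc x.
Arguments projw_orth {R N S} hS w hw hc x t.
Arguments projw_inH {R N S} hS w hw hc x.
Arguments projw_l2 {R N S} hS w hw hc x.
Arguments projw_fix {R N S} hS w hw hc s.
Arguments projw_lin {R N S} hS w hw hc a x y.
Arguments projw_sym {R N S} hS w hw hc x y.
Arguments projw_contr {R N S} hS w hw hc x.

Section L9a.
Context {R : realType}.
Local Notation C := R[i].
Local Notation seqC := (nat -> C).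
Implicit Types (x y z : seqC) (w : nat -> R).

Lemma subs_gen x y z : subs (subs z y) (subs z x) = subs x y.
Proof.
apply/funext => k; rewrite /subs.
by rewrite opprB addrC addrA subrK.
Qed.

Lemma conv_uniq (u : nat -> seqC) v1 v2 : (forall n, l2 (u n)) -> l2 v1 -> l2 v2 -> conv u v1 -> conv u v2 -> v1 = v2.
Proof.
move=> lu l1 l2' c1 c2.
have ld := l2_subs _ _ l1 l2'.
have h : nn (subs v1 v2) = 0.
  apply/eqP; rewrite eq_le nn_ge0 // andbT; apply/ler_addgt0Pr => e he; rewrite add0r.
  have he4 : 0 < e / 4 by apply: divr_gt0.
  have [M1 h1] := c1 _ he4; have [M2 h2] := c2 _ he4.
  have := h1 (maxn M1 M2) (leq_maxl _ _); have := h2 (maxn M1 M2) (leq_maxr _ _).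
  have := nn_sub_le (subs (u (maxn M1 M2)) v2) (subs (u (maxn M1 M2)) v1) (l2_subs _ _ (lu _) l2') (l2_subs _ _ (lu _) l1).
  rewrite subs_gen; lra.
have := nn_eq0 _ ld h => hz; apply/funext => k.
by have := congr1 (fun f => f k) hz; rewrite /subs /zeros => /eqP; rewrite subr_eq0 => /eqP.
Qed.

Lemma conv_coord (u : nat -> seqC) (v : seqC) k : (forall n, u n k = 0) -> (forall n, l2 (u n)) -> l2 v -> conv u v -> v k = 0.
Proof.
move=> h0 lu lv cv; apply: rdot_eq0.
apply/eqP; rewrite eq_le rdot_ge0 andbT; apply/ler_addgt0Pr => e he; rewrite add0r.
have [M hM] := cv _ he.
have := term_le_nn (subs (u M) v) k (l2_subs _ _ (lu M) lv).
rewrite /subs h0 sub0r.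
have -> : rdot (- v k) (- v k) = rdot (v k) (v k) by rewrite rdotNl rdotC rdotNl opprK.
move=> h1; apply: le_trans h1 _; exact: hM.
Qed.

Lemma conv_lin (a : C) (u u' : nat -> seqC) (v v' : seqC) : (forall n, l2 (u n)) -> (forall n, l2 (u' n)) -> l2 v -> l2 v' ->
  conv u v -> conv u' v' -> conv (fun n => lin a (u n) (u' n)) (lin a v v').
Proof.
move=> lu lu' lv lv' c1 c2 e he.
have hK : 0 < 2 * rdot a a + 1 by have := rdot_ge0 a; lra.
have he1 : 0 < e / (2 * (2 * rdot a a + 1)) by apply: divr_gt0 => //; apply: mulr_gt0.
have he2 : 0 < e / 4 by apply: divr_gt0.
have [M1 h1] := c1 _ he1; have [M2 h2] := c2 _ he2.
exists (maxn M1 M2) => n hn.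
have hn1 : (M1 <= n)%N by apply: leq_trans hn; exact: leq_maxl.
have hn2 : (M2 <= n)%N by apply: leq_trans hn; exact: leq_maxr.
have e1 : subs (lin a (u n) (u' n)) (lin a v v') = lin a (subs (u n) v) (subs (u' n) v').
  by apply/funext => k; rewrite /subs /lin opprD addrACA -mulrBr.
rewrite e1.
have lp := l2_subs _ _ (lu n) lv; have lp' := l2_subs _ _ (lu' n) lv'.
have le1 : nn (lin a (subs (u n) v) (subs (u' n) v')) <=
    2 * rdot a a * nn (subs (u n) v) + 2 * nn (subs (u' n) v').
  rewrite !nnE -!ssumZ //.
  rewrite -ssumD; try exact: summableZ.
  apply: ssum_le; [exact: l2_lin | apply: summableD; exact: summableZ |].
  by move=> k; rewrite /lin; apply: rdot_lin_le.
have := h1 n hn1; have := h2 n hn2.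
have ra := rdot_ge0 a.
have : 2 * rdot a a * nn (subs (u n) v) <= 2 * rdot a a * (e / (2 * (2 * rdot a a + 1))).
  by apply: ler_wpM2l => //; [lra | exact: h1].
have : 2 * rdot a a * (e / (2 * (2 * rdot a a + 1))) <= e / 2.
  move: (rdot_ge0 a) hK; move: (rdot a a) => r r0 hK'.
  have -> : 2 * r * (e / (2 * (2 * r + 1))) = e / 2 * (2 * r / (2 * r + 1)).
    by field; apply/eqP; lra.
  apply: ler_piMr; first by apply: ltW; apply: divr_gt0.
  by rewrite ler_pdivrMr // mul1r; lra.
move: le1; move: (2 * rdot a a * nn (subs (u n) v)) (2 * rdot a a * (e / (2 * (2 * rdot a a + 1)))) => p1 p2.
lra.
Qed.

Lemma F_small w y e : wgt w -> (forall k, w k <= 1) -> l2 y -> 0 < e ->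
  exists d, 0 < d /\ forall z, l2 z -> nn z <= d -> `|F w z y| <= e.
Proof.
move=> hw h1 ly he.
have ny := nn_ge0 _ ly.
pose eta := (nn y + 1) / e.
have heta : 0 < eta by apply: divr_gt0 => //; lra.
exists (e / eta); split; first exact: divr_gt0.
move=> z lz hz.
have fz := F_upper w 1 z h1 hw lz; have fy := F_upper w 1 y h1 hw ly.
rewrite mul1r in fz; rewrite mul1r in fy.
have ie : eta^-1 = e / (nn y + 1) by rewrite /eta invf_div.
have b1 : eta * F w z z <= e.
  have : eta * F w z z <= eta * (e / eta) by apply: ler_wpM2l; [exact: ltW | exact: le_trans hz].
  have -> : eta * (e / eta) = e by rewrite mulrC divfK // gt_eqF.
  by [].
have b2 : eta^-1 * F w y y <= e.
  have : eta^-1 * F w y y <= eta^-1 * nn y by apply: ler_wpM2l => //; rewrite invr_ge0 ltW.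
  move/le_trans; apply; rewrite ie mulrAC ler_pdivrMr; last lra.
  rewrite mulrDr mulr1; move: (e * nn y) => p; lra.
have c1 := F_cross w z y eta hw lz ly heta.
have lmy := l2_rsc (-1) y ly.
have c2 := F_cross w z (rsc (-1) y) eta hw lz lmy heta.
have e1 : F w z (rsc (-1) y) = - F w z y by rewrite F_sym F_rscl // F_sym; ring.
have e2 : F w (rsc (-1) y) (rsc (-1) y) = F w y y.
  by rewrite F_rscl // F_sym F_rscl //; ring.
rewrite e1 e2 in c2.
move: c1 c2 b1 b2; move: (eta * F w z z) (eta^-1 * F w y y) => p1 p2 c1 c2 b1 b2.
rewrite ler_norml; apply/andP; split; lra.
Qed.

End L9a.



Arguments S_inH {R N S} hS s.
Arguments S_l2 {R N S} hS s.
Arguments S_zeros {R N S} hS.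
Arguments S_lin {R N S} hS a s t.
Arguments S_subs {R N S} hS s t.
Arguments S_mulI {R N S} hS s.
Arguments S_rsc {R N S} hS r s.
Arguments S_addS {R N S} hS s t.
Arguments projw_eq {R N S} hS w hw hc x u.
Arguments projw_spec {R N S} hS w hw hc x.
Arguments projw_S {R N S} hS w hw hc x.
Arguments projw_orth {R N S} hS w hw hc x t.
Arguments projw_inH {R N S} hS w hw hc x.
Arguments projw_l2 {R N S} hS w hw hc x.
Arguments projw_fix {R N S} hS w hw hc s.
Arguments projw_lin {R N S} hS w hw hc a x y.
Arguments projw_sym {R N S} hS w hw hc x y.
Arguments projw_contr {R N S} hS w hw hc x.

Section L10.
Context {R : realType}.
Local Notation C := R[i].
Local Notation seqC := (nat -> C).
Implicit Types (x y z : seqC) (w : nat -> R).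

Variables (N : option nat) (S : set seqC) (q : nat -> bool) (M0 : R).
Hypothesis hS : closed_subspace N S.
Hypothesis hM : forall d : nat -> R, Dplus N d ->
     forall P, is_PAS N (diagR d) S P -> opnorm_le N P M0.
Local Notation wa := (@wq R q).
Local Notation wn := (@wn R q).
Local Notation wb := (@wbd R q).
Local Notation Pn := (@Pnd R S q).

Definition Qp (x : seqC) : seqC :=
  match pselect (exists v, l2 v /\ conv (fun n => Pn n x) v) with
  | left h => proj1_sig (cid h)
  | right _ => zeros R
  end.

Lemma Pn_l2' n x : inH N x -> l2 (Pn n x).
Proof. exact: (Pn_l2 N S q hS). Qed.

Lemma Qp_spec x : inH N x -> l2 (Qp x) /\ conv (fun n => Pn n x) (Qp x).
Proof.
move=> hx; rewrite /Qp; case: pselect => [h|h]; first by case: (cid h).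
by exfalso; apply: h; exact: (lim_exists N S q M0 hS hM x hx).
Qed.

Lemma Qp_eq x v : inH N x -> l2 v -> conv (fun n => Pn n x) v -> Qp x = v.
Proof.
move=> hx lv cv; have [l c] := Qp_spec x hx.
by apply: (conv_uniq (fun n => Pn n x)) => // n; exact: Pn_l2'.
Qed.

Lemma Qp_inH x : inH N x -> inH N (Qp x).
Proof.
move=> hx; have [l c] := Qp_spec x hx.
apply: l2_inH => // k hk.
apply: (conv_coord (fun n => Pn n x)) => //; last by move=> n; exact: Pn_l2'.
move=> n; have [hs _] := S_inH hS _ (Pn_S N S q hS n x hx); exact: hs.
Qed.

Lemma Qp_S x : inH N x -> S (Qp x).
Proof.
move=> hx; have [l c] := Qp_spec x hx.
case: hS => _ [_ [_ Scl]]; apply: (Scl (fun n => Pn n x)).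
- by move=> n; exact: (Pn_S N S q hS).
- exact: Qp_inH.
have -> : (fun n => hnorm (subs (Pn n x) (Qp x))) = (fun n => Num.sqrt (nn (subs (Pn n x) (Qp x)))).
  by apply/funext => n; rewrite hnormE.
apply: sqrt_cvg0 => // n; apply: nn_ge0; apply: l2_subs => //; exact: Pn_l2'.
Qed.

Lemma Qp_fix s : S s -> Qp s = s.
Proof.
move=> hs; have hi := S_inH hS _ hs.
apply: Qp_eq => //; first exact: S_l2 hS _ hs.
move=> e he; exists 0%N => n _.
rewrite /Pnd (projw_fix hS _ (wgt_wn q n) (coer_wn q n) s hs) subss /nn F_zerol.
exact: ltW.
Qed.

Lemma Qp_lin a x y : inH N x -> inH N y -> Qp (lin a x y) = lin a (Qp x) (Qp y).
Proof.
move=> hx hy; have [lx cx] := Qp_spec x hx; have [ly cy] := Qp_spec y hy.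
apply: Qp_eq; first exact: inH_lin.
  exact: l2_lin.
have -> : (fun n => Pn n (lin a x y)) = (fun n => lin a (Pn n x) (Pn n y)).
  apply/funext => n; exact: (projw_lin hS _ (wgt_wn q n) (coer_wn q n)).
apply: conv_lin => // n; exact: Pn_l2'.
Qed.

Lemma Qp_bound x : inH N x -> nn (Qp x) <= 2 * M0 ^+ 2 * nn x.
Proof.
move=> hx; have [l c] := Qp_spec x hx.
apply/ler_addgt0Pr => e he.
have he2 : 0 < e / 2 by apply: divr_gt0.
have [M hM'] := c _ he2.
have lp := Pn_l2' M x hx.
have := nn_sub_le (Pn M x) (subs (Pn M x) (Qp x)) lp (l2_subs _ _ lp l).
have -> : subs (Pn M x) (subs (Pn M x) (Qp x)) = Qp x.
  by apply/funext => k; rewrite /subs opprB addrC subrK.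
have := hM' M (leqnn _); have := Pn_bound N S q M0 hS hM M x hx.
have h2 : 2 * (e / 2) = e by field.
rewrite -mulrA; move: h2; move: (M0 ^+ 2 * nn x) (e / 2) => p t; lra.
Qed.

Lemma Qp_sym x y : inH N x -> inH N y -> F wa (Qp x) y = F wa x (Qp y).
Proof.
move=> hx hy.
have lx := inH_l2 _ _ hx; have ly := inH_l2 _ _ hy.
have [lqx cx] := Qp_spec x hx; have [lqy cy] := Qp_spec y hy.
have wa1 : forall k, wa k <= 1 by move=> k; rewrite /wq; case: (q k); rewrite ?ler01 ?lexx.
apply/eqP; rewrite -subr_eq0 -normr_le0; apply/ler_addgt0Pr => e he; rewrite add0r.
have he3 : 0 < e / 3 by apply: divr_gt0.
have [d1 [d10 hd1]] := F_small wa y (e / 3) (wgt_wq q) wa1 ly he3.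
have [d2 [d20 hd2]] := F_small wa x (e / 3) (wgt_wq q) wa1 lx he3.
have [M1 hM1] := cx _ d10.
have [M2 hM2] := cy _ d20.
pose B1 := nn x + nn y + M0 ^+ 2 * nn x + M0 ^+ 2 * nn y.
have B10 : 0 <= B1.
  have := nn_ge0 _ lx; have := nn_ge0 _ ly.
  have : 0 <= M0 ^+ 2 * nn x by apply: mulr_ge0; [exact: sqr_ge0 | exact: nn_ge0].
  have : 0 <= M0 ^+ 2 * nn y by apply: mulr_ge0; [exact: sqr_ge0 | exact: nn_ge0].
  rewrite /B1; move: (M0 ^+ 2 * nn x) (M0 ^+ 2 * nn y) => p1 p2; lra.
have he4 : 0 < e / 3 / (2 * B1 + 1) by apply: divr_gt0 => //; lra.
have [M3 hM3] := archi_eps _ he4.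
pose n := maxn M1 (maxn M2 M3).
have hn1 : (M1 <= n)%N by apply: leq_maxl.
have hn2 : (M2 <= n)%N by rewrite /n; apply: leq_trans (leq_maxr _ _); apply: leq_maxl.
have hn3 : (M3 <= n)%N by rewrite /n; apply: leq_trans (leq_maxr _ _); apply: leq_maxr.
have lpx := Pn_l2' n x hx; have lpy := Pn_l2' n y hy.
have sy := projw_sym hS _ (wgt_wn q n) (coer_wn q n) x y hx hy.
rewrite (F_split q n) // (F_split q n) // in sy.
have d1e : F wa (Qp x) y = F wa (Pn n x) y + F wa (subs (Qp x) (Pn n x)) y.
  by rewrite F_subl //; [ring | exact: wgt_wq].
have d2e : F wa x (Qp y) = F wa x (Pn n y) + F wa (subs (Qp y) (Pn n y)) x.
  by rewrite F_subl //; [rewrite (F_sym wa x) (F_sym wa x (Pn n y)); ring | exact: wgt_wq].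
have t1 : `|F wa (subs (Qp x) (Pn n x)) y| <= e / 3.
  apply: hd1; first exact: l2_subs.
  by rewrite nn_subC; apply: hM1.
have t2 : `|F wa (subs (Qp y) (Pn n y)) x| <= e / 3.
  apply: hd2; first exact: l2_subs.
  by rewrite nn_subC; apply: hM2.
have wb1 : forall k, wb k <= 1 by move=> k; rewrite /wbd; case: (q k); rewrite ?ler01 ?lexx.
have b1 : `|F wb x (Pn n y)| <= B1.
  have := F_abs wb x (Pn n y) (wgt_wb q) lx lpy.
  have := F_upper wb 1 x wb1 (wgt_wb q) lx; have := F_upper wb 1 (Pn n y) wb1 (wgt_wb q) lpy.
  have := Pn_bound N S q M0 hS hM n y hy; have := nn_ge0 _ lpy.
  have := nn_ge0 _ lx; have := nn_ge0 _ ly.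
  have : 0 <= M0 ^+ 2 * nn x by apply: mulr_ge0; [exact: sqr_ge0 | exact: nn_ge0].
  rewrite /B1; move: (M0 ^+ 2 * nn x) (M0 ^+ 2 * nn y) => p1 p2; lra.
have b2 : `|F wb (Pn n x) y| <= B1.
  have := F_abs wb (Pn n x) y (wgt_wb q) lpx ly.
  have := F_upper wb 1 y wb1 (wgt_wb q) ly; have := F_upper wb 1 (Pn n x) wb1 (wgt_wb q) lpx.
  have := Pn_bound N S q M0 hS hM n x hx; have := nn_ge0 _ lpx.
  have := nn_ge0 _ lx; have := nn_ge0 _ ly.
  have : 0 <= M0 ^+ 2 * nn y by apply: mulr_ge0; [exact: sqr_ge0 | exact: nn_ge0].
  rewrite /B1; move: (M0 ^+ 2 * nn x) (M0 ^+ 2 * nn y) => p1 p2; lra.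
have t3 : `|epsn n * (F wb x (Pn n y) - F wb (Pn n x) y)| <= e / 3.
  rewrite normrM ger0_norm; last exact: ltW (epsn_gt0 n).
  have hb : `|F wb x (Pn n y) - F wb (Pn n x) y| <= 2 * B1.
    apply: le_trans (ler_normB _ _) _; lra.
  have h3 := hM3 n hn3.
  have : epsn n * `|F wb x (Pn n y) - F wb (Pn n x) y| <= epsn n * (2 * B1 + 1).
    apply: ler_wpM2l; [exact: ltW (epsn_gt0 n) | lra].
  have : epsn n * (2 * B1 + 1) <= e / 3 / (2 * B1 + 1) * (2 * B1 + 1).
    by apply: ler_wpM2r => //; lra.
  have -> : e / 3 / (2 * B1 + 1) * (2 * B1 + 1) = e / 3 by rewrite divfK // gt_eqF //; lra.
  move: (epsn n * `|F wb x (Pn n y) - F wb (Pn n x) y|) (epsn n * (2 * B1 + 1)) => p1 p2; lra.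
have -> : F wa (Qp x) y - F wa x (Qp y) =
   F wa (subs (Qp x) (Pn n x)) y - F wa (subs (Qp y) (Pn n y)) x
   + epsn n * (F wb x (Pn n y) - F wb (Pn n x) y).
  rewrite d1e d2e; move: sy; rewrite /Pnd => sy; lra.
apply: le_trans (ler_normD _ _) _.
apply: le_trans (lerD (ler_normB _ _) (lexx _)) _.
move: t1 t2 t3; move: (`|F wa (subs (Qp x) (Pn n x)) y|) (`|F wa (subs (Qp y) (Pn n y)) x|)
  (`|epsn n * (F wb x (Pn n y) - F wb (Pn n x) y)|) => p1 p2 p3; lra.
Qed.

End L10.



Arguments S_inH {R N S} hS s.
Arguments S_l2 {R N S} hS s.
Arguments S_zeros {R N S} hS.
Arguments S_lin {R N S} hS a s t.
Arguments S_subs {R N S} hS s t.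
Arguments S_mulI {R N S} hS s.
Arguments S_rsc {R N S} hS r s.
Arguments S_addS {R N S} hS s t.
Arguments projw_eq {R N S} hS w hw hc x u.
Arguments projw_spec {R N S} hS w hw hc x.
Arguments projw_S {R N S} hS w hw hc x.
Arguments projw_orth {R N S} hS w hw hc x t.
Arguments projw_inH {R N S} hS w hw hc x.
Arguments projw_l2 {R N S} hS w hw hc x.
Arguments projw_fix {R N S} hS w hw hc s.
Arguments projw_lin {R N S} hS w hw hc a x y.
Arguments projw_sym {R N S} hS w hw hc x y.
Arguments projw_contr {R N S} hS w hw hc x.

Theorem lemma4p5 (R : realType) (N : option nat) (S : set (nat -> R[i])) :
  closed_subspace N S ->
  (exists M : R, forall d : nat -> R, Dplus N d ->
     forall P, is_PAS N (diagR d) S P -> opnorm_le N P M) ->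
  forall q : nat -> bool, compatible N (diagP q) S.
Proof.
move=> hS [M0 hM] q.
exists (Qp S q).
split.
  split; first by move=> x hx; exact: (Qp_inH N S q M0 hS hM).
  split; first by move=> a x y hx hy; exact: (Qp_lin N S q M0 hS hM a x y hx hy).
  exists (Num.sqrt (2 * M0 ^+ 2)) => x hx.
  have lx := inH_l2 _ _ hx.
  apply: hnorm_le_nn => //; first exact: sqrtr_ge0.
  - by apply: (inH_l2 N); exact: (Qp_inH N S q M0 hS hM).
  - rewrite sqr_sqrtr; first exact: (Qp_bound N S q M0 hS hM).
    by apply: mulr_ge0 => //; exact: sqr_ge0.
split; first by move=> x hx; apply: (Qp_fix N S q M0 hS hM); exact: (Qp_S N S q M0 hS hM).
split.
  move=> z; split.
    move=> hz; exists z; split; first exact: (S_inH hS).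
    by rewrite (Qp_fix N S q M0 hS hM).
  by case=> x [hx ->]; exact: (Qp_S N S q M0 hS hM).
move=> x y hx hy; rewrite !ipE !F_diagP.
have h0 : inH N (zeros R) := S_inH hS _ (S_zeros hS).
have hiy : inH N (mulI y).
  have := inH_lin N 'i%C y (zeros R) hy h0.
  by have -> : lin 'i%C y (zeros R) = mulI y by apply/funext => k; rewrite /lin /mulI /zeros addr0.
have e : mulI (Qp S q y) = Qp S q (mulI y).
  have := Qp_lin N S q M0 hS hM 'i%C y (zeros R) hy h0.
  rewrite (Qp_fix N S q M0 hS hM _ (S_zeros hS)).
  have -> : lin 'i%C y (zeros R) = mulI y by apply/funext => k; rewrite /lin /mulI /zeros addr0.
  by have -> : lin 'i%C (Qp S q y) (zeros R) = mulI (Qp S q y) by apply/funext => k; rewrite /lin /mulI /zeros addr0.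
rewrite e.
by rewrite (Qp_sym N S q M0 hS hM x y hx hy) (Qp_sym N S q M0 hS hM x (mulI y) hx hiy).
Qed.
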